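(* Let $I$, ${\cal X}_I$, ${\cal Q}_I$, $T_I$ and $\phi_\sigma$ be as in the context. If $\sigma$ is a satisfying assignment for $I$, then ${\cal T}_\sigma=(T_I,\phi_\sigma)$ is a ternary phylogenetic ${\cal X}_I$-tree that displays ${\cal Q}_I$ and is distinguished by ${\cal Q}_I$.
   Context: Instance: $I$ has variables $v_1,\ldots,v_n$, each occurring in at least one clause, and clauses ${\cal C}_1,\ldots,{\cal C}_m$; each clause is an ordered triple of literals written ${\cal C}_j=X\vee Y\vee Z$, and no variable occurs more than once in a clause. Literals are $v_i$ or $\overline{v_i}$, $\overline W$ is the negation of literal $W$. A truth assignment $\sigma$ extends to literals by $\sigma(\overline{v_i})=1-\sigma(v_i)$; it is satisfying if each clause has exactly one literal of value 1. $\Delta_i$ is the set of $j$ such that $v_i$ or $\overline{v_i}$ occurs in ${\cal C}_j$. Ground set ${\cal X}_I$: $\alpha_{v_i},\alpha_{\overline{v_i}}$ ($1\le i\le n$); $\beta^j_{v_i},\beta^j_{\overline{v_i}}$ ($j\in\Delta_i$); $\gamma^j_1,\gamma^j_2,\gamma^j_3,\lambda^j$ ($1\le j\le m$); $\delta,\mu$. Sets: $B=\{\mu,\delta\}$, $H_{v_i}=\{\alpha_{v_i},\delta\}$, $H_{\overline{v_i}}=\{\alpha_{\overline{v_i}},\delta\}$, $A_i=\{\alpha_{v_i},\alpha_{\overline{v_i}}\}$, $S^j_{v_i}=\{\alpha_{v_i},\beta^j_{v_i}\}$, $S^j_{\overline{v_i}}=\{\alpha_{\overline{v_i}},\beta^j_{\overline{v_i}}\}$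 ($j\in\Delta_i$); for ${\cal C}_j=X\vee Y\vee Z$: $K^j_{\overline X}=\{\beta^j_X,\gamma^j_1\}$, $K^j_{\overline Y}=\{\beta^j_Y,\gamma^j_2\}$, $K^j_{\overline Z}=\{\beta^j_Z,\gamma^j_3\}$, $K^j_X=\{\beta^j_{\overline X},\lambda^j\}$, $K^j_Y=\{\beta^j_{\overline Y},\lambda^j\}$, $K^j_Z=\{\beta^j_{\overline Z},\lambda^j\}$, $L^j_X=\{\beta^j_{\overline X},\gamma^j_2\}$, $L^j_Y=\{\beta^j_{\overline Y},\gamma^j_3\}$, $L^j_Z=\{\beta^j_{\overline Z},\gamma^j_1\}$, $D^j_p=\{\gamma^j_p,\lambda^j\}$, $F^j=\{\lambda^j,\mu\}$ (objects indexed by a literal $W$ mean the one for that literal). ${\cal Q}_I$ (quartet trees = partial splits $P|P'$ of two disjoint 2-sets) consists of: $A_i|B$; $D^j_p|B$ ($p=1,2,3$); $S^j_{v_i}|S^{j'}_{\overline{v_i}}$ ($j,j'\in\Delta_i$); $S^j_{v_i}|K^{j'}_{\overline{v_i}}$, $S^j_{\overline{v_i}}|K^{j'}_{v_i}$ ($j<j'$ in $\Delta_i$); $K^j_{\overline{v_i}}|F^{j'}$, $K^j_{v_i}|F^{j'}$ ($j\in\Delta_i$, $j<j'\le m$); $H_{v_{i'}}|S^j_{v_i}$, $H_{\overline{v_{i'}}}|S^j_{v_i}$, $H_{v_{i'}}|S^j_{\overline{v_i}}$, $H_{\overline{v_{i'}}}|S^j_{\overline{v_i}}$ ($1\le i'<i\le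 n$, $j\in\Delta_i$); $H_{\overline{v_i}}|F^j$, $H_{v_i}|F^j$ (all $i,j$); for each ${\cal C}_j=X\vee Y\vee Z$: $K^j_{\overline X}|K^j_X$, $K^j_{\overline Y}|K^j_Y$, $K^j_{\overline Z}|K^j_Z$, $K^j_{\overline X}|L^j_X$, $K^j_{\overline Y}|L^j_Y$, $K^j_{\overline Z}|L^j_Z$, $S^j_Y|K^j_X$, $S^j_Z|K^j_Y$, $S^j_X|K^j_Z$, $S^j_Z|L^j_X$, $S^j_X|L^j_Y$, $S^j_Y|L^j_Z$. Tree $T_I$: vertices $y_0,\ldots,y_n$, $y'_1,\ldots,y'_n$, $a_i,a'_i$ ($1\le i\le n$), $u_0,\ldots,u_m$, and for each $j$: $x^j_1,\ldots,x^j_6,b^j_1,b^j_2,b^j_3,g^j_1,g^j_2,g^j_3,\ell^j$, and $c^j_i,z^j_i$ for each $i$ and $j\in\Delta_i$. Edges: $y_iy'_i$, $a_iy'_i$ ($1\le i\le n$); $c^j_iz^j_i$ ($j\in\Delta_i$); $y_0y_1,y_1y_2,\ldots,y_{n-1}y_n$; $y_nu_1,u_1u_2,\ldots,u_{m-1}u_m,u_mu_0$; for each $j$: $u_jx^j_1$, $x^j_1x^j_2$, $x^j_2x^j_3$, $x^j_2x^j_4$, $x^j_4x^j_5$, $x^j_4x^j_6$, $b^j_1x^j_6$, $b^j_2x^j_3$, $b^j_3x^j_5$, $g^j_1x^j_6$, $g^j_2x^j_1$, $g^j_3x^j_3$, $\ell^jx^j_5$; for each $i$ with $\Delta_i=\{j_1<\cdots<j_t\}$: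 $a'_iz^{j_1}_i, z^{j_1}_iz^{j_2}_i,\ldots,z^{j_{t-1}}_iz^{j_t}_i, z^{j_t}_iy'_i$. Map $\phi_\sigma:{\cal X}_I\to V(T_I)$: for each $i$, if $\sigma(v_i)=1$ then $\alpha_{v_i}\mapsto a_i$, $\alpha_{\overline{v_i}}\mapsto a'_i$, $\beta^j_{\overline{v_i}}\mapsto c^j_i$ for $j\in\Delta_i$; if $\sigma(v_i)=0$ then $\alpha_{\overline{v_i}}\mapsto a_i$, $\alpha_{v_i}\mapsto a'_i$, $\beta^j_{v_i}\mapsto c^j_i$ for $j\in\Delta_i$. For each ${\cal C}_j=X\vee Y\vee Z$: if $\sigma(X)=1$: $\beta^j_X\mapsto b^j_1$, $\beta^j_{\overline Y}\mapsto b^j_2$, $\beta^j_{\overline Z}\mapsto b^j_3$, $\gamma^j_1\mapsto g^j_1$, $\gamma^j_2\mapsto g^j_2$, $\gamma^j_3\mapsto g^j_3$; if $\sigma(Y)=1$: $\beta^j_Y\mapsto b^j_1$, $\beta^j_{\overline Z}\mapsto b^j_2$, $\beta^j_{\overline X}\mapsto b^j_3$, $\gamma^j_2\mapsto g^j_1$, $\gamma^j_3\mapsto g^j_2$, $\gamma^j_1\mapsto g^j_3$; if $\sigma(Z)=1$: $\beta^j_Z\mapsto b^j_1$, $\beta^j_{\overline X}\mapsto b^j_2$, $\beta^j_{\overline Y}\mapsto b^j_3$, $\gamma^j_3\mapsto g^j_1$, $\gamma^j_1\mapsto g^j_2$, $\gamma^j_2\mapsto g^j_3$; in all cases $\lambda^j\mapsto\ell^j$.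 Finally $\delta\mapsto y_0$, $\mu\mapsto u_0$. An $X$-tree is $(T,\phi)$, $T$ a tree, $\phi:X\to V(T)$ with $\phi^{-1}(v)\ne\emptyset$ for vertices of degree $\le2$; ternary if internal vertices have degree 3; phylogenetic if $\phi$ is a bijection onto the leaves. $(T,\phi)$ displays a partial split $P|P'$ if there is an edge set $F$ with $\phi(P)$, $\phi(P')$ in different components of $T-F$; an edge $e$ is distinguished by $P|P'$ if every such $F$ contains $e$. The tree displays ${\cal Q}_I$ if it displays every member, and is distinguished by ${\cal Q}_I$ if every internal edge (not incident with a leaf) is distinguished by some member. *)

(* Defs.v *)
(* Concrete encoding of the reduction from positive/general
   1-in-3-SAT instances to quartet compatibility (ground set X_I, quartet set
   Q_I, tree T_I, map phi_sigma), with 1-based indices as in the paper. *)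
From Stdlib Require Import Arith List Relations Bool.
Import ListNotations.

(* A graph is a vertex predicate Vs and a symmetric adjacency adj.      *)

Fixpoint chain {V : Type} (R : V -> V -> Prop) (l : list V) : Prop :=
  match l with
  | x :: ((y :: _) as r) => R x y /\ chain R r
  | _ => True
  end.

Definition has_cycle {V : Type} (adj : V -> V -> Prop) : Prop :=
  exists (x : V) (r : list V),
    NoDup (x :: r) /\ 2 <= length r /\ chain adj (x :: r) /\ adj (last r x) x.

Definition is_tree {V : Type} (Vs : V -> Prop) (adj : V -> V -> Prop) : Prop :=
  (exists l : list V, forall v, Vs v <-> In v l) /\
  (exists v, Vs v) /\
  (forall u v, adj u v -> Vs u /\ Vs v) /\
  (forall u v, adj u v -> adj v u) /\
  (forall u, ~ adj u u) /\
  (forall u v, Vs u -> Vs v -> clos_refl_trans V adj u v) /\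
  ~ has_cycle adj.

Definition degree {V : Type} (adj : V -> V -> Prop) (v : V) (k : nat) : Prop :=
  exists l : list V, NoDup l /\ (forall w, In w l <-> adj v w) /\ length l = k.

Definition is_leaf {V : Type} (Vs : V -> Prop) (adj : V -> V -> Prop) (v : V) : Prop :=
  Vs v /\ degree adj v 1.

Definition is_internal {V : Type} (Vs : V -> Prop) (adj : V -> V -> Prop) (v : V) : Prop :=
  Vs v /\ ~ is_leaf Vs adj v.

Definition is_X_tree {V X : Type} (Vs : V -> Prop) (adj : V -> V -> Prop)
  (Xs : X -> Prop) (phi : X -> V) : Prop :=
  is_tree Vs adj /\
  (forall x, Xs x -> Vs (phi x)) /\
  (forall v k, Vs v -> degree adj v k -> k <= 2 -> exists x, Xs x /\ phi x = v).

Definition is_ternary {V : Type} (Vs : V -> Prop) (adj : V -> V -> Prop) : Prop :=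
  forall v, is_internal Vs adj v -> degree adj v 3.

Definition is_phylogenetic {V X : Type} (Vs : V -> Prop) (adj : V -> V -> Prop)
  (Xs : X -> Prop) (phi : X -> V) : Prop :=
  (forall x, Xs x -> is_leaf Vs adj (phi x)) /\
  (forall x y, Xs x -> Xs y -> phi x = phi y -> x = y) /\
  (forall v, is_leaf Vs adj v -> exists x, Xs x /\ phi x = v).

(* a quartet tree / partial split P|P' with P = {a,b}, P' = {c,d} *)
Definition quartet (X : Type) : Type := ((X * X) * (X * X))%type.

(* T - F, for an edge set F (given as a relation; edge uv is removed iff
   F u v or F v u) *)
Definition adj_minus {V : Type} (adj : V -> V -> Prop) (F : V -> V -> Prop)
  (u v : V) : Prop := adj u v /\ ~ F u v /\ ~ F v u.

Definition edge_set {V : Type} (adj : V -> V -> Prop) (F : V -> V -> Prop) : Prop :=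
  forall u v, F u v -> adj u v.

Definition separates {V X : Type} (adj : V -> V -> Prop) (phi : X -> V)
  (F : V -> V -> Prop) (q : quartet X) : Prop :=
  let '((a, b), (c, d)) := q in
  let conn := clos_refl_trans V (adj_minus adj F) in
  conn (phi a) (phi b) /\ conn (phi c) (phi d) /\ ~ conn (phi a) (phi c).

Definition displays {V X : Type} (adj : V -> V -> Prop) (phi : X -> V)
  (q : quartet X) : Prop :=
  exists F, edge_set adj F /\ separates adj phi F q.

Definition distinguishes {V X : Type} (adj : V -> V -> Prop) (phi : X -> V)
  (q : quartet X) (u v : V) : Prop :=
  adj u v /\
  forall F, edge_set adj F -> separates adj phi F q -> F u v \/ F v u.

Definition displays_set {V X : Type} (adj : V -> V -> Prop) (phi : X -> V)
  (Q : quartet X -> Prop) : Prop :=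
  forall q, Q q -> displays adj phi q.

Definition distinguished_by {V X : Type} (Vs : V -> Prop) (adj : V -> V -> Prop)
  (phi : X -> V) (Q : quartet X -> Prop) : Prop :=
  forall u v, adj u v -> ~ is_leaf Vs adj u -> ~ is_leaf Vs adj v ->
    exists q, Q q /\ distinguishes adj phi q u v.

(* literal (i, true) = v_i, (i, false) = negation of v_i *)
Definition lit : Type := (nat * bool)%type.
Definition negl (l : lit) : lit := (fst l, negb (snd l)).
Definition lit_eqb (l l' : lit) : bool :=
  Nat.eqb (fst l) (fst l') && Bool.eqb (snd l) (snd l').
Definition vpos (i : nat) : lit := (i, true).
Definition vneg (i : nat) : lit := (i, false).

Definition lval (sigma : nat -> bool) (l : lit) : bool :=
  if snd l then sigma (fst l) else negb (sigma (fst l)).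

(* An instance: variables 1..n, clauses 1..m; clause j is the ordered triple
   cl j 1 \/ cl j 2 \/ cl j 3. *)
Definition wf_instance (n m : nat) (cl : nat -> nat -> lit) : Prop :=
  (forall j p, 1 <= j <= m -> 1 <= p <= 3 -> 1 <= fst (cl j p) <= n) /\
  (forall j p q, 1 <= j <= m -> 1 <= p <= 3 -> 1 <= q <= 3 ->
     fst (cl j p) = fst (cl j q) -> p = q) /\
  (forall i, 1 <= i <= n -> exists j p, 1 <= j <= m /\ 1 <= p <= 3 /\ fst (cl j p) = i).

Definition satisfying (m : nat) (cl : nat -> nat -> lit) (sigma : nat -> bool) : Prop :=
  forall j, 1 <= j <= m ->
    exists p, 1 <= p <= 3 /\ lval sigma (cl j p) = true /\
      forall q, 1 <= q <= 3 -> lval sigma (cl j q) = true -> q = p.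

Definition in_delta (m : nat) (cl : nat -> nat -> lit) (i j : nat) : Prop :=
  1 <= j <= m /\ exists p, 1 <= p <= 3 /\ fst (cl j p) = i.

Definition pos (cl : nat -> nat -> lit) (j i : nat) : nat :=
  if Nat.eqb (fst (cl j 1)) i then 1 else if Nat.eqb (fst (cl j 2)) i then 2 else 3.

Inductive taxon : Type :=
| TAlpha (l : lit)
| TBeta (j : nat) (l : lit)
| TGamma (j p : nat)
| TLambda (j : nat)
| TDelta
| TMu.

Definition XI (n m : nat) (cl : nat -> nat -> lit) (x : taxon) : Prop :=
  match x with
  | TAlpha l => 1 <= fst l <= n
  | TBeta j l => 1 <= fst l <= n /\ in_delta m cl (fst l) j
  | TGamma j p => 1 <= j <= m /\ 1 <= p <= 3
  | TLambda j => 1 <= j <= m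
  | TDelta => True
  | TMu => True
  end.

Definition Bs : taxon * taxon := (TMu, TDelta).
Definition Hs (l : lit) : taxon * taxon := (TAlpha l, TDelta).
Definition As (i : nat) : taxon * taxon := (TAlpha (vpos i), TAlpha (vneg i)).
Definition Ss (j : nat) (l : lit) : taxon * taxon := (TAlpha l, TBeta j l).
(* K^j_W for a literal W whose variable occurs in clause j:
   K^j_{neg(C_j,p)} = {beta^j_{C_j,p}, gamma^j_p},
   K^j_{C_j,p}      = {beta^j_{neg(C_j,p)}, lambda^j} *)
Definition Ks (cl : nat -> nat -> lit) (j : nat) (W : lit) : taxon * taxon :=
  let p := pos cl j (fst W) in
  (TBeta j (negl W), if lit_eqb W (cl j p) then TLambda j else TGamma j p).
(* L^j_X = {beta_negX, gamma_2}, L^j_Y = {beta_negY, gamma_3},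
   L^j_Z = {beta_negZ, gamma_1} *)
Definition next3 (p : nat) : nat := match p with 1 => 2 | 2 => 3 | _ => 1 end.
Definition Ls (cl : nat -> nat -> lit) (j p : nat) : taxon * taxon :=
  (TBeta j (negl (cl j p)), TGamma j (next3 p)).
Definition Ds (j p : nat) : taxon * taxon := (TGamma j p, TLambda j).
Definition Fs (j : nat) : taxon * taxon := (TLambda j, TMu).

Definition QI (n m : nat) (cl : nat -> nat -> lit) (q : quartet taxon) : Prop :=
  (exists i, 1 <= i <= n /\ q = (As i, Bs)) \/
  (exists j p, 1 <= j <= m /\ 1 <= p <= 3 /\ q = (Ds j p, Bs)) \/
  (exists i j j', 1 <= i <= n /\ in_delta m cl i j /\ in_delta m cl i j' /\
     q = (Ss j (vpos i), Ss j' (vneg i))) \/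
  (exists i j j', 1 <= i <= n /\ in_delta m cl i j /\ in_delta m cl i j' /\ j < j' /\
     (q = (Ss j (vpos i), Ks cl j' (vneg i)) \/ q = (Ss j (vneg i), Ks cl j' (vpos i)))) \/
  (exists i j j', 1 <= i <= n /\ in_delta m cl i j /\ j < j' <= m /\
     (q = (Ks cl j (vneg i), Fs j') \/ q = (Ks cl j (vpos i), Fs j'))) \/
  (exists i' i j, 1 <= i' /\ i' < i <= n /\ in_delta m cl i j /\
     (q = (Hs (vpos i'), Ss j (vpos i)) \/ q = (Hs (vneg i'), Ss j (vpos i)) \/
      q = (Hs (vpos i'), Ss j (vneg i)) \/ q = (Hs (vneg i'), Ss j (vneg i)))) \/
  (exists i j, 1 <= i <= n /\ 1 <= j <= m /\
     (q = (Hs (vneg i), Fs j) \/ q = (Hs (vpos i), Fs j))) \/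
  (exists j, 1 <= j <= m /\
     let X := cl j 1 in let Y := cl j 2 in let Z := cl j 3 in
     (q = (Ks cl j (negl X), Ks cl j X) \/ q = (Ks cl j (negl Y), Ks cl j Y) \/
      q = (Ks cl j (negl Z), Ks cl j Z) \/
      q = (Ks cl j (negl X), Ls cl j 1) \/ q = (Ks cl j (negl Y), Ls cl j 2) \/
      q = (Ks cl j (negl Z), Ls cl j 3) \/
      q = (Ss j Y, Ks cl j X) \/ q = (Ss j Z, Ks cl j Y) \/ q = (Ss j X, Ks cl j Z) \/
      q = (Ss j Z, Ls cl j 1) \/ q = (Ss j X, Ls cl j 2) \/ q = (Ss j Y, Ls cl j 3))).

Inductive vert : Type :=
| VY (k : nat)
| VY' (i : nat)
| VA (i : nat)
| VA' (i : nat)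
| VU (k : nat)
| VX (j k : nat)
| VB (j p : nat)
| VG (j p : nat)
| VL (j : nat)
| VC (i j : nat)
| VZ (i j : nat).

Definition TI_verts (n m : nat) (cl : nat -> nat -> lit) (v : vert) : Prop :=
  match v with
  | VY k => k <= n
  | VY' i | VA i | VA' i => 1 <= i <= n
  | VU k => k <= m
  | VX j k => 1 <= j <= m /\ 1 <= k <= 6
  | VB j p | VG j p => 1 <= j <= m /\ 1 <= p <= 3
  | VL j => 1 <= j <= m
  | VC i j | VZ i j => 1 <= i <= n /\ in_delta m cl i j
  end.

Definition delta_first (m : nat) (cl : nat -> nat -> lit) (i j : nat) : Prop :=
  in_delta m cl i j /\ forall j', in_delta m cl i j' -> j <= j'.
Definition delta_last (m : nat) (cl : nat -> nat -> lit) (i j : nat) : Prop :=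
  in_delta m cl i j /\ forall j', in_delta m cl i j' -> j' <= j.
Definition delta_succ (m : nat) (cl : nat -> nat -> lit) (i j j' : nat) : Prop :=
  in_delta m cl i j /\ in_delta m cl i j' /\ j < j' /\
  forall j'', in_delta m cl i j'' -> j < j'' -> j' <= j''.

Definition TI_edge (n m : nat) (cl : nat -> nat -> lit) (u v : vert) : Prop :=
  (exists i, 1 <= i <= n /\ u = VY i /\ v = VY' i) \/
  (exists i, 1 <= i <= n /\ u = VA i /\ v = VY' i) \/
  (exists i j, 1 <= i <= n /\ in_delta m cl i j /\ u = VC i j /\ v = VZ i j) \/
  (exists k, k < n /\ u = VY k /\ v = VY (S k)) \/
  (u = VY n /\ v = VU 1) \/
  (exists k, 1 <= k /\ k < m /\ u = VU k /\ v = VU (S k)) \/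
  (u = VU m /\ v = VU 0) \/
  (exists j, 1 <= j <= m /\
     ((u = VU j /\ v = VX j 1) \/ (u = VX j 1 /\ v = VX j 2) \/
      (u = VX j 2 /\ v = VX j 3) \/ (u = VX j 2 /\ v = VX j 4) \/
      (u = VX j 4 /\ v = VX j 5) \/ (u = VX j 4 /\ v = VX j 6) \/
      (u = VB j 1 /\ v = VX j 6) \/ (u = VB j 2 /\ v = VX j 3) \/
      (u = VB j 3 /\ v = VX j 5) \/ (u = VG j 1 /\ v = VX j 6) \/
      (u = VG j 2 /\ v = VX j 1) \/ (u = VG j 3 /\ v = VX j 3) \/
      (u = VL j /\ v = VX j 5))) \/
  (exists i j, 1 <= i <= n /\ delta_first m cl i j /\ u = VA' i /\ v = VZ i j) \/
  (exists i j j', 1 <= i <= n /\ delta_succ m cl i j j' /\ u = VZ i j /\ v = VZ i j') \/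
  (exists i j, 1 <= i <= n /\ delta_last m cl i j /\ u = VZ i j /\ v = VY' i).

Definition TI_adj (n m : nat) (cl : nat -> nat -> lit) (u v : vert) : Prop :=
  TI_edge n m cl u v \/ TI_edge n m cl v u.

Definition tpos (cl : nat -> nat -> lit) (sigma : nat -> bool) (j : nat) : nat :=
  if lval sigma (cl j 1) then 1 else if lval sigma (cl j 2) then 2 else 3.

(* rot t p: index of b/g vertex receiving the object of position p when the
   true literal is at position t:
   t = 1 (sigma(X)=1): 1->1, 2->2, 3->3;
   t = 2 (sigma(Y)=1): 2->1, 3->2, 1->3;
   t = 3 (sigma(Z)=1): 3->1, 1->2, 2->3. *)
Definition rot (t p : nat) : nat :=
  match t, p with
  | 1, _ => p
  | 2, 1 => 3
  | 2, 2 => 1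
  | 2, _ => 2
  | _, 1 => 2
  | _, 2 => 3
  | _, _ => 1
  end.

Definition phi_sigma (cl : nat -> nat -> lit) (sigma : nat -> bool) (x : taxon) : vert :=
  match x with
  | TAlpha l => if lval sigma l then VA (fst l) else VA' (fst l)
  | TBeta j l =>
      if lval sigma l then VB j (rot (tpos cl sigma j) (pos cl j (fst l)))
      else VC (fst l) j
  | TGamma j p => VG j (rot (tpos cl sigma j) p)
  | TLambda j => VL j
  | TDelta => VY 0
  | TMu => VU 0
  end.

(* Main.v *)
Require Import Defs.
From Stdlib Require Import Arith Lia List Bool Relations Classical_Prop Setoid Morphisms.
Import ListNotations.

Section Main.
Variables (n m : nat) (cl : nat -> nat -> lit).
Hypothesis Hm : 1 <= m.
Hypothesis Hwf : wf_instance n m cl.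

Notation ind := (in_delta m cl).

Definition indb (i j : nat) : bool :=
  (1 <=? j) && (j <=? m) && ((fst (cl j 1) =? i) || (fst (cl j 2) =? i) || (fst (cl j 3) =? i)).

Lemma indb_spec i j : indb i j = true <-> ind i j.
Proof.
  unfold indb, in_delta. rewrite !andb_true_iff, !orb_true_iff, !Nat.leb_le, !Nat.eqb_eq.
  split.
  - intros [[H1 H2] [[H|H]|H]]; (split; [lia|]); eexists; split; try exact H; lia.
  - intros [H [p [Hp Hq]]]. split; [lia|].
    assert (Hp3 : p = 1 \/ p = 2 \/ p = 3) by lia; destruct Hp3 as [Hp3|[Hp3|Hp3]]; subst p; tauto.
Qed.

Lemma indb_false i j : indb i j = false <-> ~ ind i j.
Proof. rewrite <- indb_spec. destruct (indb i j); split; congruence. Qed.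

Lemma ind_range i j : ind i j -> 1 <= j <= m.
Proof. intros [H _]; exact H. Qed.

Fixpoint find_up (f : nat -> bool) (j fuel : nat) : option nat :=
  match fuel with 0 => None | S k => if f j then Some j else find_up f (S j) k end.

Lemma find_up_spec f j fuel : match find_up f j fuel with
 | Some r => j <= r < j + fuel /\ f r = true /\ (forall x, j <= x < r -> f x = false)
 | None => forall x, j <= x < j + fuel -> f x = false end.
Proof.
  revert j; induction fuel; intros j; simpl.
  - intros; lia.
  - destruct (f j) eqn:E.
    + split; [lia|split; auto]. intros; lia.
    + specialize (IHfuel (S j)). destruct (find_up f (S j) fuel).
      * destruct IHfuel as [H1 [H2 H3]]. split;[lia|split;auto].
        intros x Hx. destruct (Nat.eq_dec x j); [subst; auto| apply H3; lia].
      * intros x Hx. destruct (Nat.eq_dec x j); [subst;auto| apply IHfuel; lia].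
Qed.

Fixpoint find_down (f : nat -> bool) (k : nat) : option nat :=
  match k with 0 => None | S k' => if f (S k') then Some (S k') else find_down f k' end.

Lemma find_down_spec f k : match find_down f k with
 | Some r => 1 <= r <= k /\ f r = true /\ (forall x, r < x <= k -> f x = false)
 | None => forall x, 1 <= x <= k -> f x = false end.
Proof.
  induction k; simpl.
  - intros; lia.
  - destruct (f (S k)) eqn:E.
    + repeat split; try lia; auto; intros; lia.
    + destruct (find_down f k).
      * destruct IHk as [H1 [H2 H3]]. repeat split; try lia; auto.
        intros x Hx. destruct (Nat.eq_dec x (S k)); [subst; auto| apply H3; lia].
      * intros x Hx. destruct (Nat.eq_dec x (S k)); [subst;auto|apply IHk; lia].
Qed.

Definition nxt i j := find_up (indb i) (S j) (m - j).
Definition fstd i := find_up (indb i) 1 m.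
Definition lastd i := find_down (indb i) m.
Definition prvd i j := find_down (indb i) (j - 1).

Ltac fspec_conv :=
  repeat match goal with
  | H : indb _ _ = true |- _ => apply indb_spec in H
  | H : forall x, _ -> indb _ x = false |- _ =>
      let H' := fresh in assert (H' : forall x, _ -> ~ ind _ x) by
        (intros; apply indb_false; apply H; auto); clear H
  end.

Lemma nxt_iff i j j' : nxt i j = Some j' <->
  (j < j' /\ ind i j' /\ forall x, j < x < j' -> ~ ind i x).
Proof.
  unfold nxt. pose proof (find_up_spec (indb i) (S j) (m - j)) as Sp.
  destruct (find_up (indb i) (S j) (m - j)) as [r|].
  - destruct Sp as [H1 [H2 H3]]. apply indb_spec in H2.
    split.
    + intros E; inversion E; subst. split; [lia|split; [exact H2|]].
      intros x Hx Hi. apply indb_spec in Hi. rewrite H3 in Hi; [discriminate|lia].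
    + intros [A [B C]]. f_equal.
      destruct (Nat.lt_trichotomy r j') as [L|[L|L]]; auto.
      * exfalso; apply (C r); auto; lia.
      * exfalso. apply indb_spec in B. rewrite H3 in B; [discriminate|].
        pose proof (ind_range _ _ H2); lia.
  - split; [discriminate|]. intros [A [B C]]. pose proof (ind_range _ _ B).
    apply indb_spec in B. rewrite Sp in B; [discriminate|lia].
Qed.

Lemma nxt_None i j : nxt i j = None <-> forall x, j < x -> ~ ind i x.
Proof.
  unfold nxt. pose proof (find_up_spec (indb i) (S j) (m - j)) as Sp.
  destruct (find_up (indb i) (S j) (m - j)) as [r|].
  - split; [discriminate|]. destruct Sp as [H1 [H2 H3]]. apply indb_spec in H2.
    intros C. exfalso; apply (C r); auto; lia.
  - split; auto. intros _ x Hx Hi. pose proof (ind_range _ _ Hi).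
    apply indb_spec in Hi. rewrite Sp in Hi; [discriminate|lia].
Qed.

Lemma fstd_iff i j : fstd i = Some j <-> (ind i j /\ forall x, x < j -> ~ ind i x).
Proof.
  unfold fstd. pose proof (find_up_spec (indb i) 1 m) as Sp.
  destruct (find_up (indb i) 1 m) as [r|].
  - destruct Sp as [H1 [H2 H3]]. apply indb_spec in H2.
    split.
    + intros E; inversion E; subst. split; auto.
      intros x Hx Hi. pose proof (ind_range _ _ Hi). apply indb_spec in Hi.
      rewrite H3 in Hi; [discriminate|lia].
    + intros [B C]. f_equal.
      destruct (Nat.lt_trichotomy r j) as [L|[L|L]]; auto.
      * exfalso; apply (C r); auto.
      * exfalso. pose proof (ind_range _ _ B). apply indb_spec in B.
        rewrite H3 in B; [discriminate|lia].
  - split; [discriminate|]. intros [B C]. pose proof (ind_range _ _ B).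
    apply indb_spec in B. rewrite Sp in B; [discriminate|lia].
Qed.

Lemma fstd_None i : fstd i = None <-> forall x, ~ ind i x.
Proof.
  unfold fstd. pose proof (find_up_spec (indb i) 1 m) as Sp.
  destruct (find_up (indb i) 1 m) as [r|].
  - split; [discriminate|]. destruct Sp as [H1 [H2 H3]]. apply indb_spec in H2.
    intros C. exfalso; apply (C r); auto.
  - split; auto. intros _ x Hi. pose proof (ind_range _ _ Hi).
    apply indb_spec in Hi. rewrite Sp in Hi; [discriminate|lia].
Qed.

Lemma lastd_iff i j : lastd i = Some j <-> (ind i j /\ forall x, j < x -> ~ ind i x).
Proof.
  unfold lastd. pose proof (find_down_spec (indb i) m) as Sp.
  destruct (find_down (indb i) m) as [r|].
  - destruct Sp as [H1 [H2 H3]]. apply indb_spec in H2.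
    split.
    + intros E; inversion E; subst. split; auto.
      intros x Hx Hi. pose proof (ind_range _ _ Hi). apply indb_spec in Hi.
      rewrite H3 in Hi; [discriminate|lia].
    + intros [B C]. f_equal.
      destruct (Nat.lt_trichotomy r j) as [L|[L|L]]; auto.
      * exfalso. pose proof (ind_range _ _ B). apply indb_spec in B.
        rewrite H3 in B; [discriminate|lia].
      * exfalso; apply (C r); auto.
  - split; [discriminate|]. intros [B C]. pose proof (ind_range _ _ B).
    apply indb_spec in B. rewrite Sp in B; [discriminate|lia].
Qed.

Lemma prvd_iff i j j0 : prvd i j = Some j0 <->
  (j0 < j /\ ind i j0 /\ forall x, j0 < x < j -> ~ ind i x).
Proof.
  unfold prvd. pose proof (find_down_spec (indb i) (j - 1)) as Sp.
  destruct (find_down (indb i) (j - 1)) as [r|].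
  - destruct Sp as [H1 [H2 H3]]. apply indb_spec in H2.
    split.
    + intros E; inversion E; subst. split; [lia|split; [exact H2|]].
      intros x Hx Hi. apply indb_spec in Hi.
      rewrite H3 in Hi; [discriminate|lia].
    + intros [A [B C]]. f_equal.
      destruct (Nat.lt_trichotomy r j0) as [L|[L|L]]; auto.
      * exfalso. pose proof (ind_range _ _ B). apply indb_spec in B.
        rewrite H3 in B; [discriminate|lia].
      * exfalso; apply (C r); auto; lia.
  - split; [discriminate|]. intros [A [B C]]. pose proof (ind_range _ _ B).
    apply indb_spec in B. rewrite Sp in B; [discriminate|lia].
Qed.

Lemma prvd_None i j : prvd i j = None <-> forall x, x < j -> ~ ind i x.
Proof.
  unfold prvd. pose proof (find_down_spec (indb i) (j - 1)) as Sp.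
  destruct (find_down (indb i) (j - 1)) as [r|].
  - split; [discriminate|]. destruct Sp as [H1 [H2 H3]]. apply indb_spec in H2.
    intros C. exfalso; apply (C r); auto; lia.
  - split; auto. intros _ x Hx Hi. pose proof (ind_range _ _ Hi).
    apply indb_spec in Hi. rewrite Sp in Hi; [discriminate|lia].
Qed.


Definition Vs := TI_verts n m cl.
Definition r0 := VY 0.

Definition par (v : vert) : vert :=
  match v with
  | VY 0 => VY 0
  | VY (S k) => VY k
  | VY' i => VY i
  | VA i => VY' i
  | VA' i => match fstd i with Some j => VZ i j | None => VY' i end
  | VZ i j => match nxt i j with Some j' => VZ i j' | None => VY' i end
  | VC i j => VZ i j
  | VU 0 => VU m
  | VU 1 => VY n
  | VU (S k) => VU k
  | VX j k => match k with 1 => VU j | 2 => VX j 1 | 3 => VX j 2 | 4 => VX j 2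
              | 5 => VX j 4 | 6 => VX j 4 | _ => VY 0 end
  | VB j p => match p with 1 => VX j 6 | 2 => VX j 3 | _ => VX j 5 end
  | VG j p => match p with 1 => VX j 6 | 2 => VX j 1 | _ => VX j 3 end
  | VL j => VX j 5
  end.

Definition meas (v : vert) : nat :=
  match v with
  | VY k => k | VY' _ => n + 1 | VA _ => n + 2 | VZ _ j => n + 3 + (m - j)
  | VA' _ => n + m + 4 | VC _ _ => n + m + 4
  | VU 0 => n + m + 1 | VU k => n + k | VX _ k => n + m + 1 + k
  | VB _ _ => n + m + 8 | VG _ _ => n + m + 8 | VL _ => n + m + 8
  end.

Lemma delta_nonempty i : 1 <= i <= n -> exists j, ind i j.
Proof.
  intros Hi. destruct Hwf as [_ [_ H3]]. destruct (H3 i Hi) as [j [p [A [B C]]]].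
  exists j. split; [lia|]. exists p; auto.
Qed.

Ltac vs_tac := simpl; first [assumption | lia | (split; vs_tac)].

Lemma par_Vs v : Vs v -> v <> r0 -> Vs (par v) /\ meas (par v) < meas v.
Proof.
  unfold Vs, r0. intros H Hne. destruct v; simpl in H |- *.
  - destruct k; [congruence|]. simpl; lia.
  - lia.
  - lia.
  - destruct (fstd i) eqn:E.
    + apply fstd_iff in E as [E1 E2]. pose proof (ind_range _ _ E1). simpl. split; [split;[lia|auto]|lia].
    + simpl; lia.
  - destruct k as [|[|k]]; simpl; try lia. destruct m; lia.
  - destruct H as [H1 H2]. destruct k as [|[|[|[|[|[|[|k]]]]]]]; simpl; try lia. destruct j; lia.
  - destruct H as [H1 H2]. destruct p as [|[|[|p]]]; simpl; lia.
  - destruct H as [H1 H2]. destruct p as [|[|[|p]]]; simpl; lia.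
  - lia.
  - destruct H as [H1 H2]. pose proof (ind_range _ _ H2). simpl. split; [split; auto|lia].
  - destruct H as [H1 H2]. destruct (nxt i j) eqn:E.
    + apply nxt_iff in E as [E1 [E2 E3]]. pose proof (ind_range _ _ E2). pose proof (ind_range _ _ H2).
      simpl. split; [split;auto|lia].
    + simpl; lia.
Qed.

Definition child (u v : vert) : Prop := Vs u /\ u <> r0 /\ v = par u.

Ltac neq_tac := unfold r0; let H := fresh in intro H; inversion H; lia.
Ltac ch := split; [unfold Vs; vs_tac | split; [neq_tac | simpl; try reflexivity]].

Lemma edge_child u v : TI_edge n m cl u v -> child u v \/ child v u.
Proof.
  unfold TI_edge. intros H.
  destruct H as [H|[H|[H|[H|[H|[H|[H|[H|[H|[H|H]]]]]]]]]].
  - destruct H as [i [Hi [-> ->]]]. right; ch.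
  - destruct H as [i [Hi [-> ->]]]. left; ch.
  - destruct H as [i [j [Hi [Hj [-> ->]]]]]. left; ch.
  - destruct H as [k [Hk [-> ->]]]. right; ch.
  - destruct H as [-> ->]. right; ch.
  - destruct H as [k [Hk [Hk' [-> ->]]]]. right; ch. destruct k; [lia|reflexivity].
  - destruct H as [-> ->]. right; ch.
  - destruct H as [j [Hj H]].
    destruct H as [ [ -> -> ] | [ [ -> -> ] | [ [ -> -> ] | [ [ -> -> ] | [ [ -> -> ] | [ [ -> -> ] | [ [ -> -> ] | [ [ -> -> ] | [ [ -> -> ] | [ [ -> -> ] | [ [ -> -> ] | [ [ -> -> ] | [ -> -> ] ] ] ] ] ] ] ] ] ] ] ] ];
    first [left; solve [ch] | right; solve [ch]].
  - destruct H as [i [j [Hi [[Hj1 Hj2] [-> ->]]]]]. left; ch.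
    assert (E : fstd i = Some j). { apply fstd_iff. split; auto. intros x Hx Hd. specialize (Hj2 x Hd). lia. }
    rewrite E; reflexivity.
  - destruct H as [i [j [j' [Hi [[Hj1 [Hj2 [Hj3 Hj4]]] [-> ->]]]]]]. left; ch.
    assert (E : nxt i j = Some j'). { apply nxt_iff. split; auto. split; auto. intros x Hx Hd. specialize (Hj4 x Hd). lia. }
    rewrite E; reflexivity.
  - destruct H as [i [j [Hi [[Hj1 Hj2] [-> ->]]]]]. left; ch.
    assert (E : nxt i j = None). { apply nxt_None. intros x Hx Hd. specialize (Hj2 x Hd). lia. }
    rewrite E; reflexivity.
Qed.

Ltac disj_refl := first [ split; reflexivity | left; split; reflexivity | right; disj_refl ].
Tactic Notation "dj" int_or_var(k) := unfold TI_edge; do k right; left.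

Lemma child_edge u v : child u v -> TI_edge n m cl u v \/ TI_edge n m cl v u.
Proof.
  unfold child, Vs, r0. intros [H [Hne ->]]. destruct u; simpl in H |- *.
  - destruct k; [congruence|]. right. dj 3. exists k; repeat split; lia.
  - right. dj 0. exists i; repeat split; lia.
  - left. dj 1. exists i; repeat split; lia.
  - destruct (fstd i) eqn:E.
    + left. dj 8. exists i, n0. split; [lia|]. split; [|auto].
      apply fstd_iff in E as [E1 E2]. split; auto. intros j' Hj'.
      destruct (Nat.lt_ge_cases j' n0); auto. exfalso; eapply E2; eauto.
    + exfalso. destruct (delta_nonempty i H) as [j Hj]. eapply fstd_None; eauto.
  - destruct k as [|[|k]].
    + right. dj 6. auto.
    + right. dj 4. auto.
    + right. dj 5. exists (S k). repeat split; lia.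
  - destruct H as [H1 H2]. right. dj 7. exists j. split; [lia|].
    destruct k as [|[|[|[|[|[|[|k]]]]]]]; try lia; simpl; disj_refl.
  - destruct H as [H1 H2]. left. dj 7. exists j. split; [lia|].
    destruct p as [|[|[|[|p]]]]; try lia; simpl; disj_refl.
  - destruct H as [H1 H2]. left. dj 7. exists j. split; [lia|].
    destruct p as [|[|[|[|p]]]]; try lia; simpl; disj_refl.
  - left. dj 7. exists j. split; [lia|]. disj_refl.
  - left. dj 2. exists i, j. tauto.
  - destruct H as [H1 H2]. destruct (nxt i j) eqn:E.
    + left. dj 9. exists i, j, n0. split; [lia|]. split; [|auto].
      apply nxt_iff in E as [E1 [E2 E3]]. split; [auto|split; [auto|split; [auto|]]].
      intros j'' Hj'' Hlt. destruct (Nat.lt_ge_cases j'' n0); auto. exfalso; eapply E3; eauto.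
    + left. unfold TI_edge. do 10 right. exists i, j. split; [lia|]. split; [|auto].
      split; auto. intros j' Hj'. destruct (Nat.lt_ge_cases j j'); [|lia].
      exfalso. eapply nxt_None; eauto.
Qed.

Lemma adj_iff u v : TI_adj n m cl u v <-> child u v \/ child v u.
Proof.
  unfold TI_adj. split.
  - intros [H|H]; apply edge_child in H; tauto.
  - intros [H|H]; apply child_edge in H; tauto.
Qed.

Notation adj := (TI_adj n m cl).

Lemma adj_sym u v : adj u v -> adj v u.
Proof. rewrite !adj_iff. tauto. Qed.

Lemma adj_Vs u v : adj u v -> Vs u /\ Vs v.
Proof.
  rewrite adj_iff. intros [[H1 [H2 ->]]|[H1 [H2 ->]]].
  - split; auto. apply par_Vs; auto.
  - split; auto. apply par_Vs; auto.
Qed.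

Lemma adj_irrefl u : ~ adj u u.
Proof.
  rewrite adj_iff. intros [[H1 [H2 H3]]|[H1 [H2 H3]]];
  pose proof (par_Vs u H1 H2) as [_ M]; rewrite <- H3 in M; lia.
Qed.

Definition anc (w x : vert) : Prop := exists k, Nat.iter k par x = w.

Lemma anc_refl x : anc x x.
Proof. exists 0; reflexivity. Qed.

Lemma anc_unfold w x : anc w x <-> w = x \/ anc w (par x).
Proof.
  split.
  - intros [[|k] H]; simpl in H; [left; auto|right].
    exists k. rewrite <- Nat.iter_succ_r. simpl. exact H.
  - intros [->|[k H]]; [apply anc_refl|]. exists (S k).
    rewrite Nat.iter_succ_r. exact H.
Qed.

Lemma anc_par x : anc (par x) x.
Proof. apply anc_unfold. right. apply anc_refl. Qed.

Lemma anc_trans a b c : anc a b -> anc b c -> anc a c.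
Proof.
  intros [k1 H1] [k2 H2]. exists (k1 + k2). rewrite Nat.iter_add. rewrite H2. exact H1.
Qed.

Lemma iter_r0 k : Nat.iter k par r0 = r0.
Proof. induction k; simpl; auto. rewrite IHk. reflexivity. Qed.

Lemma anc_r0 w : anc w r0 -> w = r0.
Proof. intros [k H]. rewrite iter_r0 in H. auto. Qed.

Lemma anc_meas w x : Vs x -> anc w x -> w = x \/ (Vs w /\ meas w < meas x).
Proof.
  intros Hx [k H]. revert x Hx H. induction k; intros x Hx H.
  - left; auto.
  - rewrite Nat.iter_succ_r in H.
    destruct (classic (x = r0)) as [E|E].
    + subst x. rewrite iter_r0 in H. left; auto.
    + destruct (par_Vs x Hx E) as [P M]. destruct (IHk (par x) P H) as [->|[A B]].
      * right; split; auto.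
      * right; split; auto; lia.
Qed.

Lemma anc_root x : Vs x -> anc r0 x.
Proof.
  remember (meas x) as N. revert x HeqN. induction N as [N IH] using lt_wf_ind.
  intros x HN Hx. destruct (classic (x = r0)) as [E|E].
  - subst; apply anc_refl.
  - destruct (par_Vs x Hx E) as [P M]. apply anc_unfold. right.
    apply (IH (meas (par x))); auto; lia.
Qed.

Lemma anc_antisym w x : Vs x -> anc w x -> anc x w -> w = x.
Proof.
  intros Hx H1 H2. destruct (anc_meas w x Hx H1) as [E|[Hw M]]; auto.
  destruct (anc_meas x w Hw H2) as [E|[_ M']]; auto. lia.
Qed.

Lemma anc_comp w u x : anc w x -> anc u x -> anc w u \/ anc u w.
Proof.
  intros [k1 H1] [k2 H2]. destruct (Nat.le_ge_cases k1 k2) as [L|L].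
  - right. exists (k2 - k1). rewrite <- H1, <- H2.
    rewrite <- Nat.iter_add. f_equal. lia.
  - left. exists (k1 - k2). rewrite <- H1, <- H2.
    rewrite <- Nat.iter_add. f_equal. lia.
Qed.

Definition Fe (F : vert -> vert -> Prop) (w : vert) : Prop := F w (par w) \/ F (par w) w.
Definition conn F := clos_refl_trans vert (adj_minus adj F).

Lemma conn_sym F x y : conn F x y -> conn F y x.
Proof.
  induction 1.
  - apply rt_step. destruct H as [A [B C]]. split; [apply adj_sym; auto|tauto].
  - apply rt_refl.
  - eapply rt_trans; eauto.
Qed.

Lemma key1 F w x y : conn F x y -> Fe F w -> (anc w x <-> anc w y).
Proof.
  intros H HF. induction H.
  - destruct H as [A [B C]]. apply adj_iff in A as [[A1 [A2 ->]]|[A1 [A2 ->]]].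
    + rewrite (anc_unfold w x). split; [|tauto]. intros [->|Z]; auto.
      exfalso. destruct HF; tauto.
    + rewrite (anc_unfold w y). split; [tauto|]. intros [->|Z]; auto.
      exfalso. destruct HF; tauto.
  - tauto.
  - tauto.
Qed.

Lemma conn_child F u : Vs u -> u <> r0 -> ~ Fe F u -> conn F u (par u).
Proof.
  intros H1 H2 H3. apply rt_step. split.
  - apply adj_iff. left. split; auto.
  - unfold Fe in H3. tauto.
Qed.

Lemma key2 F x y : Vs x -> Vs y ->
  (forall w, Vs w -> w <> r0 -> Fe F w -> (anc w x <-> anc w y)) -> conn F x y.
Proof.
  remember (meas x + meas y) as N. revert x y HeqN.
  induction N as [N IH] using lt_wf_ind. intros x y HN Hx Hy HF.
  destruct (classic (anc x y)) as [A|A].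
  - destruct (classic (x = y)) as [E|E]; [subst; apply rt_refl|].
    assert (Yr : y <> r0). { intro Z; subst. apply anc_r0 in A. congruence. }
    assert (NF : ~ Fe F y).
    { intro Z. pose proof (HF y Hy Yr Z) as Q. assert (anc y x) by (apply Q; apply anc_refl).
      apply E. apply anc_antisym; auto. }
    destruct (par_Vs y Hy Yr) as [P M].
    eapply rt_trans; [| apply conn_sym, conn_child; eauto].
    apply (IH (meas x + meas (par y))); auto; [lia|].
    intros w Hw Hwr Fw. rewrite (HF w Hw Hwr Fw). rewrite (anc_unfold w y).
    split; [|tauto]. intros [->|Z]; auto. contradiction.
  - assert (Xr : x <> r0). { intro Z; subst. apply A. apply anc_root; auto. }
    assert (NF : ~ Fe F x).
    { intro Z. pose proof (HF x Hx Xr Z) as Q. apply A. apply Q. apply anc_refl. }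
    destruct (par_Vs x Hx Xr) as [P M].
    eapply rt_trans; [apply conn_child; eauto|].
    apply (IH (meas (par x) + meas y)); auto; [lia|].
    intros w Hw Hwr Fw. rewrite <- (HF w Hw Hwr Fw). rewrite (anc_unfold w x).
    split; [tauto|]. intros [->|Z]; auto. contradiction.
Qed.

Definition vlist : list vert :=
  map VY (seq 0 (S n)) ++ map VY' (seq 1 n) ++ map VA (seq 1 n) ++ map VA' (seq 1 n) ++
  map VU (seq 0 (S m)) ++
  flat_map (fun j => map (VX j) (seq 1 6) ++ map (VB j) (seq 1 3) ++ map (VG j) (seq 1 3) ++ [VL j])
    (seq 1 m) ++
  flat_map (fun i => flat_map (fun j => if indb i j then [VC i j; VZ i j] else []) (seq 1 m)) (seq 1 n).

Ltac in_dec_tac :=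
  repeat match goal with
  | H : In _ (_ ++ _) |- _ => apply in_app_iff in H; destruct H as [H|H]
  | H : In _ (map _ _) |- _ => apply in_map_iff in H; destruct H as [? [? H]]
  | H : In _ (flat_map _ _) |- _ => apply in_flat_map in H; destruct H as [? [? H]]
  | H : In _ (seq _ _) |- _ => apply in_seq in H
  | H : In _ (if ?b then _ else _) |- _ => let E := fresh in destruct b eqn:E; [apply indb_spec in E|]
  | H : In _ [] |- _ => destruct H
  | H : In _ (_ :: _) |- _ => destruct H as [H|H]
  end.

Tactic Notation "in_part" int_or_var(k) := do k (apply in_app_iff; right); apply in_app_iff; left.

Lemma vlist_spec v : Vs v <-> In v vlist.
Proof.
  unfold Vs, vlist. split.
  - destruct v; intros H; simpl in H.
    + in_part 0. apply in_map. apply in_seq; lia.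
    + in_part 1. apply in_map. apply in_seq; lia.
    + in_part 2. apply in_map. apply in_seq; lia.
    + in_part 3. apply in_map. apply in_seq; lia.
    + in_part 4. apply in_map. apply in_seq; lia.
    + in_part 5. apply in_flat_map. exists j. split; [apply in_seq; lia|].
      apply in_app_iff; left. apply in_map. apply in_seq; lia.
    + in_part 5. apply in_flat_map. exists j. split; [apply in_seq; lia|].
      apply in_app_iff; right; apply in_app_iff; left. apply in_map. apply in_seq; lia.
    + in_part 5. apply in_flat_map. exists j. split; [apply in_seq; lia|].
      apply in_app_iff; right; apply in_app_iff; right; apply in_app_iff; left.
      apply in_map. apply in_seq; lia.
    + in_part 5. apply in_flat_map. exists j. split; [apply in_seq; lia|].
      apply in_app_iff; right; apply in_app_iff; right; apply in_app_iff; right. left; auto.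
    + do 6 (apply in_app_iff; right). destruct H as [H1 H2]. pose proof (ind_range _ _ H2).
      apply in_flat_map. exists i. split; [apply in_seq; lia|].
      apply in_flat_map. exists j. split; [apply in_seq; lia|].
      apply indb_spec in H2. rewrite H2. left; auto.
    + do 6 (apply in_app_iff; right). destruct H as [H1 H2]. pose proof (ind_range _ _ H2).
      apply in_flat_map. exists i. split; [apply in_seq; lia|].
      apply in_flat_map. exists j. split; [apply in_seq; lia|].
      apply indb_spec in H2. rewrite H2. right; left; auto.
  - intros H. in_dec_tac; subst; simpl; try lia; auto. all: split; [lia|auto].
Qed.

Lemma chain_nth {V : Type} (R : V -> V -> Prop) l d :
  chain R l -> forall k, S k < length l -> R (nth k l d) (nth (S k) l d).
Proof.
  induction l as [|a l IH]; simpl; intros H k Hk; [lia|].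
  destruct l as [|b l]; simpl in *; [lia|].
  destruct H as [H1 H2]. destruct k; auto. apply (IH H2 k). simpl; lia.
Qed.

Lemma last_nth {V : Type} (r : list V) x : r <> [] -> last r x = nth (length r - 1) r x.
Proof.
  induction r as [|a r IH]; intros H; [congruence|].
  destruct r as [|b r]; [reflexivity|].
  change (last (a :: b :: r) x) with (last (b :: r) x).
  rewrite IH by congruence. simpl. rewrite Nat.sub_0_r. reflexivity.
Qed.

Lemma argmax (g : nat -> nat) L : 1 <= L -> exists k, k < L /\ forall k', k' < L -> g k' <= g k.
Proof.
  induction L; intros H; [lia|]. destruct L.
  - exists 0. split; auto. intros; assert (k' = 0) by lia; subst; auto.
  - destruct IHL as [k [Hk Hm']]; [lia|].
    destruct (Nat.le_ge_cases (g (S L)) (g k)).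
    + exists k. split; [lia|]. intros k' Hk'. destruct (Nat.eq_dec k' (S L)); [subst; auto|apply Hm'; lia].
    + exists (S L). split; [lia|]. intros k' Hk'. destruct (Nat.eq_dec k' (S L)); [subst; auto|].
      specialize (Hm' k'); lia.
Qed.

Lemma adj_max_par u v : adj u v -> meas v <= meas u -> v = par u.
Proof.
  intros H M. apply adj_iff in H as [[A [B C]]|[A [B C]]]; auto.
  pose proof (par_Vs v A B) as [_ M']. rewrite <- C in M'. lia.
Qed.

Lemma acyclic : ~ has_cycle adj.
Proof.
  intros [x [r [ND [Lr [Ch La]]]]].
  set (c := x :: r) in *. set (L := length c).
  assert (HL : L = S (length r)) by reflexivity.
  set (f := fun k => nth k c x).
  assert (Hs : forall k, S k < L -> adj (f k) (f (S k))).
  { intros k Hk. apply chain_nth; auto. }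
  assert (Hl : adj (f (L - 1)) (f 0)).
  { unfold f. rewrite HL. replace (S (length r) - 1) with (S (length r - 1)) by lia.
    unfold c. simpl nth. rewrite <- last_nth; auto. intro Z; subst r; simpl in Lr; lia. }
  destruct (argmax (fun k => meas (f k)) L) as [k [Hk Hmax]]; [lia|].
  set (kp := if S k <? L then S k else 0).
  set (km := if k =? 0 then L - 1 else k - 1).
  assert (A1 : adj (f k) (f kp)).
  { unfold kp. destruct (S k <? L) eqn:E.
    - apply Nat.ltb_lt in E. auto.
    - apply Nat.ltb_ge in E. replace k with (L - 1) by lia. auto. }
  assert (A2 : adj (f k) (f km)).
  { unfold km. destruct (k =? 0) eqn:E.
    - apply Nat.eqb_eq in E. subst k. apply adj_sym. auto.
    - apply Nat.eqb_neq in E. apply adj_sym. pose proof (Hs (k - 1)) as Q. replace (S (k - 1)) with k in Q by lia. apply Q. lia. }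
  assert (kp < L) by (unfold kp; destruct (S k <? L) eqn:E; [apply Nat.ltb_lt in E|]; lia).
  assert (km < L) by (unfold km; destruct (k =? 0); lia).
  apply adj_max_par in A1; [|apply Hmax; auto].
  apply adj_max_par in A2; [|apply Hmax; auto].
  assert (E : f kp = f km) by congruence.
  unfold f in E. apply (NoDup_nth c x) in E; auto.
  unfold kp, km in E. destruct (S k <? L) eqn:E1; destruct (k =? 0) eqn:E2;
    try apply Nat.ltb_lt in E1; try apply Nat.ltb_ge in E1;
    try apply Nat.eqb_eq in E2; try apply Nat.eqb_neq in E2; lia.
Qed.

Lemma conn_rt F x y : conn F x y -> clos_refl_trans vert adj x y.
Proof.
  induction 1.
  - apply rt_step. destruct H; auto.
  - apply rt_refl.
  - eapply rt_trans; eauto.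
Qed.

Lemma tree_ok : is_tree Vs adj.
Proof.
  split; [|split; [|split; [|split; [|split; [|split]]]]].
  - exists vlist. apply vlist_spec.
  - exists r0. unfold Vs, r0; simpl; lia.
  - apply adj_Vs.
  - apply adj_sym.
  - apply adj_irrefl.
  - intros u v Hu Hv. apply (conn_rt (fun _ _ => False)). apply key2; auto.
    intros w _ _ [Z|Z]; contradiction.
  - apply acyclic.
Qed.


Lemma lastd_None i : lastd i = None <-> forall x, ~ ind i x.
Proof.
  unfold lastd. pose proof (find_down_spec (indb i) m) as Sp.
  destruct (find_down (indb i) m) as [r|].
  - split; [discriminate|]. destruct Sp as [H1 [H2 H3]]. apply indb_spec in H2.
    intros C. exfalso; apply (C r); auto.
  - split; auto. intros _ x Hi. pose proof (ind_range _ _ Hi).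
    apply indb_spec in Hi. rewrite Sp in Hi; [discriminate|lia].
Qed.

Lemma n_pos : 1 <= n.
Proof.
  destruct Hwf as [H1 _]. specialize (H1 1 1). lia.
Qed.

Definition kids (v : vert) : list vert :=
  match v with
  | VY k => (if k <? n then [VY (S k)] else [VU 1]) ++ (if 1 <=? k then [VY' k] else [])
  | VY' i => [VA i; match lastd i with Some j => VZ i j | None => VA' i end]
  | VZ i j => [VC i j; match prvd i j with Some j0 => VZ i j0 | None => VA' i end]
  | VU k => match k with 0 => [] | S _ => [if k <? m then VU (S k) else VU 0; VX k 1] end
  | VX j k => match k with 1 => [VX j 2; VG j 2] | 2 => [VX j 3; VX j 4] | 3 => [VB j 2; VG j 3]
              | 4 => [VX j 5; VX j 6] | 5 => [VB j 3; VL j] | 6 => [VB j 1; VG j 1] | _ => [] end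
  | _ => []
  end.

Ltac in_list H := repeat match type of H with
  | _ \/ _ => destruct H as [H|H] | False => contradiction end.

Lemma kids_sound v w : Vs v -> In w (kids v) -> child w v.
Proof.
  pose proof n_pos as Hn.
  unfold Vs, child, r0. intros Hv H. destruct v; simpl in Hv, H.
  - assert (Hb : (k <? n) = true /\ k < n \/ (k <? n) = false /\ k = n).
    { destruct (k <? n) eqn:E; [apply Nat.ltb_lt in E|apply Nat.ltb_ge in E]; [left|right]; split; auto; lia. }
    destruct Hb as [[Eb Hk]|[Eb Hk]]; rewrite Eb in H; destruct k as [|k]; simpl in H; in_list H; subst;
    try lia; (split; [simpl; lia | split; [neq_tac | simpl; first [reflexivity | f_equal; lia]]]).
  - destruct H as [H|[H|H]]; [subst| |contradiction].
    + split; [simpl; lia|split; [neq_tac|reflexivity]].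
    + destruct (lastd i) eqn:E.
      * subst. apply lastd_iff in E as [E1 E2]. split; [simpl; split; auto|split; [neq_tac|]].
        simpl. assert (nxt i n0 = None) as ->; auto. apply nxt_None. intros x Hx Hd; eapply E2; eauto.
      * exfalso. destruct (delta_nonempty i Hv) as [j Hj]. eapply lastd_None; eauto.
  - lia.
  - lia.
  - destruct k as [|k]; [contradiction|].
    destruct H as [H|[H|H]]; [| |contradiction].
    + destruct (S k <? m) eqn:E; subst.
      * apply Nat.ltb_lt in E. split; [simpl; lia| split; [neq_tac|reflexivity]].
      * apply Nat.ltb_ge in E. split; [simpl; lia| split; [neq_tac|]]. simpl. f_equal. lia.
    + subst. split; [simpl; lia| split; [neq_tac|reflexivity]].
  - destruct Hv as [H1 H2].
    destruct k as [|[|[|[|[|[|[|k]]]]]]]; simpl in H; try lia;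
    in_list H; subst;
    (split; [simpl; lia| split; [neq_tac|reflexivity]]).
  - contradiction.
  - contradiction.
  - contradiction.
  - contradiction.
  - destruct Hv as [H1 H2]. pose proof (ind_range _ _ H2).
    destruct H as [H|[H|H]]; [subst| |contradiction].
    + split; [simpl; split; auto|split; [neq_tac|reflexivity]].
    + destruct (prvd i j) eqn:E.
      * subst. apply prvd_iff in E as [E1 [E2 E3]]. split; [simpl; split; auto|split; [neq_tac|]].
        simpl. assert (nxt i n0 = Some j) as ->; auto. apply nxt_iff. split; auto.
      * subst. pose proof (proj1 (prvd_None i j) E) as E'. split; [simpl; lia|split; [neq_tac|]].
        simpl. assert (fstd i = Some j) as ->; auto. apply fstd_iff. split; auto.
Qed.

Lemma kids_complete v w : child w v -> In w (kids v).
Proof.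
  pose proof n_pos as Hn.
  unfold Vs, child, r0. intros [Hw [Hne ->]]. destruct w; simpl in Hw.
  - destruct k; [congruence|]. simpl. destruct (k <? n) eqn:E.
    + left; auto.
    + apply Nat.ltb_ge in E. lia.
  - simpl. destruct (i <? n); apply in_app_iff; right; destruct i; simpl; try lia; left; auto.
  - simpl; auto.
  - simpl. destruct (fstd i) eqn:E.
    + simpl. apply fstd_iff in E as [E1 E2]. assert (prvd i n0 = None) as ->; [|right; left; auto].
      apply prvd_None. intros; apply E2; auto.
    + exfalso. destruct (delta_nonempty i Hw) as [j Hj]. eapply fstd_None; eauto.
  - destruct k as [|[|k]]; simpl.
    + destruct m as [|m']; [lia|]. simpl. rewrite Nat.ltb_irrefl. left; auto.
    + destruct (n <? n) eqn:E; [apply Nat.ltb_lt in E; lia|]. apply in_app_iff; left; left; auto.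
    + destruct (S k <? m) eqn:E; [left; auto|apply Nat.ltb_ge in E; lia].
  - destruct Hw as [H1 H2]. destruct k as [|[|[|[|[|[|[|k]]]]]]]; try lia; simpl; auto. destruct j; [lia|]. right; left; auto.
  - destruct Hw as [H1 H2]. destruct p as [|[|[|[|p]]]]; try lia; simpl; auto.
  - destruct Hw as [H1 H2]. destruct p as [|[|[|[|p]]]]; try lia; simpl; auto.
  - simpl; auto.
  - simpl; auto.
  - destruct Hw as [H1 H2]. simpl. destruct (nxt i j) eqn:E.
    + apply nxt_iff in E as [E1 [E2 E3]]. simpl.
      assert (prvd i n0 = Some j) as ->; [|right; left; auto].
      apply prvd_iff. auto.
    + simpl. assert (lastd i = Some j) as ->; [|right; left; auto].
      apply lastd_iff. split; auto. apply nxt_None; auto.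
Qed.

Definition nb (v : vert) : list vert :=
  match v with VY 0 => kids v | _ => par v :: kids v end.

Lemma nb_shape v : (v = r0 /\ nb v = kids v) \/ (v <> r0 /\ nb v = par v :: kids v).
Proof.
  unfold r0. destruct v; try (destruct k); simpl; try (left; split; reflexivity);
  right; split; auto; congruence.
Qed.

Lemma nb_spec v w : Vs v -> (adj v w <-> In w (nb v)).
Proof.
  intros Hv. rewrite adj_iff. destruct (nb_shape v) as [[E1 E2]|[E1 E2]]; rewrite E2; split.
  - intros [[A [B C]]|C]; [congruence|]. apply kids_complete; auto.
  - intros H. right. apply kids_sound; auto.
  - intros [[A [B C]]|C]; [left; auto|right; apply kids_complete; auto].
  - intros [H|H]; [left; split; auto; split; auto|right; apply kids_sound; auto].
Qed.

Lemma kids_NoDup v : NoDup (kids v).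
Proof.
  destruct v; cbv beta iota delta [kids].
  - destruct (k <? n); destruct (1 <=? k); simpl; repeat constructor; simpl; intuition congruence.
  - repeat constructor; simpl; [|tauto]. intros [H|H]; [|auto]. destruct (lastd i); congruence.
  - constructor.
  - constructor.
  - destruct k; [constructor|]. repeat constructor; simpl; [|tauto]. intros [H|H]; [|auto].
    destruct (S k <? m); congruence.
  - destruct k as [|[|[|[|[|[|[|k]]]]]]]; repeat constructor; simpl; intuition congruence.
  - constructor.
  - constructor.
  - constructor.
  - constructor.
  - repeat constructor; simpl; [|tauto]. intros [H|H]; [|auto]. destruct (prvd i j); congruence.
Qed.

Lemma nb_NoDup v : Vs v -> NoDup (nb v).
Proof.
  intros Hv. assert (NP : v <> r0 -> ~ In (par v) (kids v)).
  { intros Hr H. apply kids_sound in H; auto. destruct H as [A [B C]].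
    destruct (par_Vs v Hv Hr) as [_ M1]. destruct (par_Vs (par v) A B) as [_ M2].
    rewrite <- C in M2. lia. }
  destruct (nb_shape v) as [[E1 E2]|[E1 E2]]; rewrite E2; [apply kids_NoDup|].
  constructor; [apply NP; auto|apply kids_NoDup].
Qed.

Definition isleafT (v : vert) : bool :=
  match v with
  | VY 0 | VA _ | VA' _ | VC _ _ | VU 0 | VB _ _ | VG _ _ | VL _ => true
  | _ => false
  end.

Lemma nb_len v : Vs v -> length (nb v) = if isleafT v then 1 else 3.
Proof.
  pose proof n_pos as Hn.
  unfold Vs. intros Hv. destruct v; simpl in Hv |- *; auto.
  - destruct k; simpl.
    + destruct (0 <? n) eqn:E; [reflexivity|apply Nat.ltb_ge in E; lia].
    + destruct (S k <? n); simpl; reflexivity.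
  - destruct k; simpl; auto.
  - destruct Hv as [H1 H2]. destruct k as [|[|[|[|[|[|[|k]]]]]]]; simpl; try lia; auto.
Qed.

Lemma degree_nb v : Vs v -> degree adj v (length (nb v)).
Proof.
  intros Hv. exists (nb v). split; [apply nb_NoDup; auto|split; auto].
  intros w. rewrite nb_spec; tauto.
Qed.

Lemma degree_unique v k k' : degree adj v k -> degree adj v k' -> k = k'.
Proof.
  intros [l [N1 [S1 L1]]] [l' [N2 [S2 L2]]].
  assert (length l <= length l'). { apply NoDup_incl_length; auto. intros x Hx. apply S2, S1; auto. }
  assert (length l' <= length l). { apply NoDup_incl_length; auto. intros x Hx. apply S1, S2; auto. }
  lia.
Qed.

Lemma leaf_iff v : is_leaf Vs adj v <-> Vs v /\ isleafT v = true.
Proof.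
  split.
  - intros [Hv D]. split; auto. pose proof (degree_nb v Hv) as D'.
    pose proof (degree_unique _ _ _ D D') as E. rewrite nb_len in E; auto.
    destruct (isleafT v); auto. discriminate.
  - intros [Hv E]. split; auto. pose proof (degree_nb v Hv) as D.
    rewrite nb_len in D; auto. rewrite E in D. exact D.
Qed.

Lemma degree_of v k : Vs v -> degree adj v k -> k = if isleafT v then 1 else 3.
Proof.
  intros Hv D. rewrite <- nb_len; auto. eapply degree_unique; eauto. apply degree_nb; auto.
Qed.

Lemma ternary_ok : is_ternary Vs adj.
Proof.
  intros v [Hv NL]. destruct (isleafT v) eqn:E.
  - exfalso. apply NL. apply leaf_iff; auto.
  - pose proof (degree_nb v Hv) as D. rewrite nb_len in D; auto. rewrite E in D. exact D.
Qed.


Lemma pos_cl j p : 1 <= j <= m -> 1 <= p <= 3 -> pos cl j (fst (cl j p)) = p.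
Proof.
  intros Hj Hp. destruct Hwf as [_ [W2 _]]. unfold pos.
  destruct (Nat.eqb (fst (cl j 1)) (fst (cl j p))) eqn:E1.
  - apply Nat.eqb_eq in E1. apply W2 in E1; auto; lia.
  - apply Nat.eqb_neq in E1. destruct (Nat.eqb (fst (cl j 2)) (fst (cl j p))) eqn:E2.
    + apply Nat.eqb_eq in E2. apply W2 in E2; auto; lia.
    + apply Nat.eqb_neq in E2. assert (p <> 1) by (intro; subst; auto).
      assert (p <> 2) by (intro; subst; auto). lia.
Qed.

Lemma pos_range j i : 1 <= pos cl j i <= 3.
Proof. unfold pos. destruct (_ =? _); [lia|]. destruct (_ =? _); lia. Qed.

Lemma ind_pos i j : ind i j -> fst (cl j (pos cl j i)) = i.
Proof.
  intros [Hj [p [Hp E]]]. subst i. rewrite pos_cl; auto.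
Qed.

Lemma rot_range t p : 1 <= p <= 3 -> 1 <= rot t p <= 3.
Proof.
  intros H. destruct t as [|[|[|t]]]; simpl; try lia;
  destruct p as [|[|[|[|p]]]]; simpl; lia.
Qed.

Lemma rot_inj t p p' : 1 <= p <= 3 -> 1 <= p' <= 3 -> rot t p = rot t p' -> p = p'.
Proof.
  intros H H'. destruct t as [|[|[|t]]]; simpl; try lia;
  destruct p as [|[|[|[|p]]]]; try lia; destruct p' as [|[|[|[|p']]]]; simpl; lia.
Qed.

Lemma rot_surj t r : 1 <= r <= 3 -> exists p, 1 <= p <= 3 /\ rot t p = r.
Proof.
  intros H. destruct t as [|[|[|t]]].
  - destruct r as [|[|[|[|r]]]]; try lia; [exists 3|exists 1|exists 2]; simpl; auto.
  - exists r; simpl; auto.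
  - destruct r as [|[|[|[|r]]]]; try lia; [exists 2|exists 3|exists 1]; simpl; auto.
  - destruct r as [|[|[|[|r]]]]; try lia; [exists 3|exists 1|exists 2]; simpl; auto.
Qed.

Variable sigma : nat -> bool.
Hypothesis Hsat : satisfying m cl sigma.

Notation phi := (phi_sigma cl sigma).

Lemma lval_same i b b' : lval sigma (i, b) = true -> lval sigma (i, b') = true -> b = b'.
Proof.
  unfold lval; simpl. destruct b, b', (sigma i); simpl; auto; discriminate.
Qed.

Lemma lval_same_f i b b' : lval sigma (i, b) = false -> lval sigma (i, b') = false -> b = b'.
Proof.
  unfold lval; simpl. destruct b, b', (sigma i); simpl; auto; discriminate.
Qed.

Lemma lval_negl l : lval sigma (negl l) = negb (lval sigma l).
Proof. destruct l as [i b]; unfold lval, negl; simpl. destruct b; simpl; auto. rewrite negb_involutive; auto. Qed.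

Definition tp j := tpos cl sigma j.

Lemma tp_range j : 1 <= tp j <= 3.
Proof. unfold tp, tpos. destruct (lval _ _); [lia|]. destruct (lval _ _); lia. Qed.

Lemma phi_Vs x : XI n m cl x -> Vs (phi x).
Proof.
  unfold Vs. destruct x; simpl; intros H.
  - destruct (lval sigma l); simpl; auto.
  - destruct H as [H1 H2]. pose proof (ind_range _ _ H2). destruct (lval sigma l); simpl.
    + split; auto. apply rot_range, pos_range.
    + split; auto.
  - split; [lia|]. pose proof (tp_range j). apply rot_range; lia.
  - auto.
  - lia.
  - lia.
Qed.

Lemma phi_leafT x : isleafT (phi x) = true.
Proof.
  destruct x; simpl; auto; destruct (lval sigma _); auto.
Qed.

Lemma phi_inj x y : XI n m cl x -> XI n m cl y -> phi x = phi y -> x = y.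
Proof.
  intros Hx Hy E. destruct x, y; simpl in *;
  repeat match goal with
  | H : context [if lval sigma ?l then _ else _] |- _ => let E := fresh "L" in destruct (lval sigma l) eqn:E
  end; try discriminate.
  - inversion E. destruct l as [i b], l0 as [i' b']; simpl in *. subst. f_equal. f_equal. eapply lval_same; eauto.
  - inversion E. destruct l as [i b], l0 as [i' b']; simpl in *. subst. f_equal. f_equal.
    eapply lval_same_f; eauto.
  - inversion E; subst. destruct Hx as [_ Hx], Hy as [_ Hy].
    apply rot_inj in H1; try apply pos_range.
    assert (fst l = fst l0) by (rewrite <- (ind_pos _ _ Hx), <- (ind_pos _ _ Hy), H1; auto).
    destruct l as [i b], l0 as [i' b']; simpl in *. subst. f_equal. f_equal. eapply lval_same; eauto.
  - inversion E; subst. destruct l as [i b], l0 as [i' b']; simpl in *. subst. f_equal. f_equal.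
    eapply lval_same_f; eauto.
  - inversion E; subst. f_equal. pose proof (tp_range j0). apply rot_inj in H1; lia.
  - inversion E; auto.
  - auto.
  - auto.
Qed.

Lemma phi_surj v : Vs v -> isleafT v = true -> exists x, XI n m cl x /\ phi x = v.
Proof.
  unfold Vs. intros Hv Hl. destruct v; simpl in Hv, Hl; try discriminate.
  - destruct k; [|discriminate]. exists TDelta; simpl; auto.
  - exists (TAlpha (i, sigma i)). simpl. split; auto.
    unfold lval; simpl. destruct (sigma i); reflexivity.
  - exists (TAlpha (i, negb (sigma i))). simpl. split; auto.
    unfold lval; simpl. destruct (sigma i); reflexivity.
  - destruct k; [|discriminate]. exists TMu; simpl; auto.
  - destruct Hv as [Hj Hp]. destruct (rot_surj (tp j) p Hp) as [q [Hq E]].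
    pose (C := cl j q). destruct Hwf as [W1 _].
    assert (HC : 1 <= fst C <= n) by (apply W1; auto).
    destruct (lval sigma C) eqn:LC.
    + exists (TBeta j C). simpl. split.
      * split; auto. split; auto. exists q; auto.
      * rewrite LC. unfold C. rewrite pos_cl by auto. unfold tp in E. rewrite E. reflexivity.
    + exists (TBeta j (negl C)). simpl. split.
      * split; auto. split; auto. exists q; auto.
      * rewrite lval_negl, LC. simpl. unfold C. rewrite pos_cl by auto. unfold tp in E. rewrite E. reflexivity.
  - destruct Hv as [Hj Hp]. destruct (rot_surj (tp j) p Hp) as [q [Hq E]].
    exists (TGamma j q). simpl. split; [split; auto|]. unfold tp in E. rewrite E. reflexivity.
  - exists (TLambda j). simpl. auto.
  - destruct Hv as [Hi Hd]. exists (TBeta j (i, negb (sigma i))). simpl. split.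
    + split; auto.
    + unfold lval; simpl. destruct (sigma i); reflexivity.
Qed.

Lemma xtree_ok : is_X_tree Vs adj (XI n m cl) phi.
Proof.
  split; [apply tree_ok|split].
  - apply phi_Vs.
  - intros v k Hv D Hk. apply degree_of in D; auto. destruct (isleafT v) eqn:E; [|lia].
    apply phi_surj; auto.
Qed.

Lemma phylo_ok : is_phylogenetic Vs adj (XI n m cl) phi.
Proof.
  split; [|split].
  - intros x Hx. apply leaf_iff. split; [apply phi_Vs; auto|apply phi_leafT].
  - apply phi_inj.
  - intros v Hv. apply leaf_iff in Hv as [A B]. apply phi_surj; auto.
Qed.


Lemma display_by (a b c d : taxon) p : Vs p -> p <> r0 ->
  Vs (phi a) -> Vs (phi b) -> Vs (phi c) -> Vs (phi d) ->
  (anc p (phi a) <-> anc p (phi b)) -> (anc p (phi c) <-> anc p (phi d)) ->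
  ~ (anc p (phi a) <-> anc p (phi c)) -> displays adj phi ((a, b), (c, d)).
Proof.
  intros Hp Hr Ha Hb Hc Hd E1 E2 E3.
  exists (fun u v => u = p /\ v = par p). split.
  - intros u v [-> ->]. apply adj_iff. left. split; auto.
  - assert (HF : forall w, Vs w -> w <> r0 -> Fe (fun u v => u = p /\ v = par p) w -> w = p).
    { intros w Hw Hwr [[A B]|[A B]]; auto. exfalso.
      destruct (par_Vs w Hw Hwr) as [P1 M1]. rewrite A in P1.
      destruct (par_Vs p Hp Hr) as [P2 M2]. rewrite A in M1. rewrite <- B in M2. lia. }
    simpl. split; [|split].
    + apply key2; auto. intros w Hw Hwr Fw. rewrite (HF w Hw Hwr Fw). auto.
    + apply key2; auto. intros w Hw Hwr Fw. rewrite (HF w Hw Hwr Fw). auto.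
    + intro C. apply E3. eapply key1; eauto. left; auto.
Qed.

Lemma sep_cond F (a b c d : taxon) :
  Vs (phi a) -> Vs (phi b) -> Vs (phi c) -> Vs (phi d) ->
  separates adj phi F ((a, b), (c, d)) ->
  exists w, Fe F w /\ (anc w (phi a) <-> anc w (phi b)) /\ (anc w (phi c) <-> anc w (phi d)) /\
    ~ (anc w (phi a) <-> anc w (phi c)).
Proof.
  intros Ha Hb Hc Hd [S1 [S2 S3]].
  destruct (classic (exists w, Vs w /\ w <> r0 /\ Fe F w /\ ~ (anc w (phi a) <-> anc w (phi c))))
    as [[w [Hw [Hwr [Fw N]]]]|N].
  - exists w. split; auto. split; [eapply key1; eauto|split; [eapply key1; eauto|auto]].
  - exfalso. apply S3. apply key2; auto. intros w Hw Hwr Fw.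
    destruct (classic (anc w (phi a) <-> anc w (phi c))) as [E|E]; auto.
    exfalso; apply N. exists w; auto.
Qed.

Definition DC (u A B C D : vert) : Prop :=
  anc u A /\ anc u B /\ (forall w, anc w A -> anc w B -> anc w u) /\
  ~ anc u C /\ ~ anc u D /\ (forall w, anc w C -> anc w D -> anc w (par u)) /\
  (anc (par u) C \/ anc (par u) D).

Lemma dc_unique u A B C D : DC u A B C D -> forall w,
  (anc w A <-> anc w B) -> (anc w C <-> anc w D) -> ~ (anc w A <-> anc w C) -> w = u.
Proof.
  intros [H1 [H2 [H3 [H4 [H5 [H6 H7]]]]]] w E1 E2 E3.
  destruct (classic (anc w A)) as [X|X].
  - assert (Wu : anc w u) by (apply H3; tauto).
    assert (NC : ~ anc w C) by tauto. assert (ND : ~ anc w D) by tauto.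
    apply anc_unfold in Wu as [Wu|Wu]; auto. exfalso.
    destruct H7 as [Y|Y]; [apply NC|apply ND]; eapply anc_trans; eauto.
  - assert (YC : anc w C) by tauto. assert (YD : anc w D) by tauto.
    exfalso. apply X. eapply anc_trans; [|exact H1]. eapply anc_trans; [apply H6; eauto|apply anc_par].
Qed.

Lemma dist_by F (a b c d : taxon) u :
  Vs (phi a) -> Vs (phi b) -> Vs (phi c) -> Vs (phi d) ->
  (DC u (phi a) (phi b) (phi c) (phi d) \/ DC u (phi c) (phi d) (phi a) (phi b)) ->
  separates adj phi F ((a, b), (c, d)) -> Fe F u.
Proof.
  intros Ha Hb Hc Hd HD HS. destruct (sep_cond F a b c d Ha Hb Hc Hd HS) as [w [Fw [E1 [E2 E3]]]].
  replace u with w; auto. destruct HD as [HD|HD].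
  - eapply dc_unique; eauto.
  - eapply dc_unique; eauto. intro Z; apply E3. rewrite E1, E2. tauto.
Qed.

Lemma lca_child u u1 a b : par u1 = u -> anc u1 a -> ~ anc u1 b -> anc u b ->
  forall w, anc w a -> anc w b -> anc w u.
Proof.
  intros P A1 B1 B2 w Wa Wb. destruct (anc_comp w u1 a Wa A1) as [X|X].
  - apply anc_unfold in X as [X|X]; [subst; contradiction|rewrite P in X; auto].
  - exfalso; apply B1. eapply anc_trans; eauto.
Qed.

Lemma lca_root c x : Vs x -> forall w, anc w c -> anc w r0 -> anc w x.
Proof. intros Hx w _ H. apply anc_r0 in H. subst. apply anc_root; auto. Qed.

Lemma lca_root' c x : Vs x -> forall w, anc w r0 -> anc w c -> anc w x.
Proof. intros Hx w H _. apply anc_r0 in H. subst. apply anc_root; auto. Qed.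

Lemma R_Y k w : anc w (VY k) <-> exists k', w = VY k' /\ k' <= k.
Proof.
  induction k.
  - split.
    + intros H. apply anc_r0 in H. exists 0; auto.
    + intros [k' [-> Hk]]. assert (k' = 0) by lia. subst; apply anc_refl.
  - rewrite anc_unfold. simpl par. rewrite IHk. split.
    + intros [->|[k' [-> Hk]]]; [exists (S k)|exists k']; split; auto.
    + intros [k' [-> Hk]]. destruct (Nat.eq_dec k' (S k)); [left; subst; auto|right; exists k'; split; auto; lia].
Qed.

Ltac unf := rewrite anc_unfold; simpl par; reflexivity.
Lemma R_Y' i w : anc w (VY' i) <-> w = VY' i \/ anc w (VY i). Proof. unf. Qed.
Lemma R_A i w : anc w (VA i) <-> w = VA i \/ anc w (VY' i). Proof. unf. Qed.
Lemma R_C i j w : anc w (VC i j) <-> w = VC i j \/ anc w (VZ i j). Proof. unf. Qed.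
Lemma R_U0 w : anc w (VU 0) <-> w = VU 0 \/ anc w (VU m). Proof. unf. Qed.
Lemma R_X1 j w : anc w (VX j 1) <-> w = VX j 1 \/ anc w (VU j). Proof. unf. Qed.
Lemma R_X2 j w : anc w (VX j 2) <-> w = VX j 2 \/ anc w (VX j 1). Proof. unf. Qed.
Lemma R_X3 j w : anc w (VX j 3) <-> w = VX j 3 \/ anc w (VX j 2). Proof. unf. Qed.
Lemma R_X4 j w : anc w (VX j 4) <-> w = VX j 4 \/ anc w (VX j 2). Proof. unf. Qed.
Lemma R_X5 j w : anc w (VX j 5) <-> w = VX j 5 \/ anc w (VX j 4). Proof. unf. Qed.
Lemma R_X6 j w : anc w (VX j 6) <-> w = VX j 6 \/ anc w (VX j 4). Proof. unf. Qed.
Lemma R_B1 j w : anc w (VB j 1) <-> w = VB j 1 \/ anc w (VX j 6). Proof. unf. Qed.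
Lemma R_B2 j w : anc w (VB j 2) <-> w = VB j 2 \/ anc w (VX j 3). Proof. unf. Qed.
Lemma R_B3 j w : anc w (VB j 3) <-> w = VB j 3 \/ anc w (VX j 5). Proof. unf. Qed.
Lemma R_G1 j w : anc w (VG j 1) <-> w = VG j 1 \/ anc w (VX j 6). Proof. unf. Qed.
Lemma R_G2 j w : anc w (VG j 2) <-> w = VG j 2 \/ anc w (VX j 1). Proof. unf. Qed.
Lemma R_G3 j w : anc w (VG j 3) <-> w = VG j 3 \/ anc w (VX j 3). Proof. unf. Qed.
Lemma R_L j w : anc w (VL j) <-> w = VL j \/ anc w (VX j 5). Proof. unf. Qed.

Lemma R_U k w : 1 <= k -> anc w (VU k) <-> (exists k', w = VU k' /\ 1 <= k' <= k) \/ anc w (VY n).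
Proof.
  intros Hk. induction k; [lia|]. destruct k.
  - rewrite anc_unfold. simpl par. split.
    + intros [->|H]; [left; exists 1; split; auto|right; auto].
    + intros [[k' [-> Hk']]|H]; [left; f_equal; lia|right; auto].
  - rewrite anc_unfold. replace (par (VU (S (S k)))) with (VU (S k)) by reflexivity.
    rewrite IHk by lia. split.
    + intros [->|[[k' [-> Hk']]|H]]; [left; exists (S (S k)); split; auto; lia|left; exists k'; split; auto; lia|right; auto].
    + intros [[k' [-> Hk']]|H]; [|right; right; auto].
      destruct (Nat.eq_dec k' (S (S k))); [left; subst; auto|right; left; exists k'; split; auto; lia].
Qed.

Lemma R_Z i j w : anc w (VZ i j) <->
  w = VZ i j \/ (exists j', w = VZ i j' /\ ind i j' /\ j < j') \/ anc w (VY' i).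
Proof.
  remember (m - j) as N. revert j HeqN. induction N as [N IH] using lt_wf_ind. intros j HN.
  rewrite anc_unfold. simpl par. destruct (nxt i j) eqn:E.
  - apply nxt_iff in E as [E1 [E2 E3]]. pose proof (ind_range _ _ E2) as Rg.
    rewrite (IH (m - n0)) by (auto; lia). split.
    + intros [->|[->|[[j' [-> [Hd Hlt]]]|H]]]; auto.
      * right; left. exists n0; auto.
      * right; left. exists j'; split; auto; split; auto; lia.
    + intros [->|[[j' [-> [Hd Hlt]]]|H]]; auto. right.
      destruct (Nat.lt_trichotomy j' n0) as [L|[L|L]].
      * exfalso; eapply E3; eauto.
      * subst; left; auto.
      * right; left; exists j'; auto.
  - pose proof (proj1 (nxt_None i j) E) as E0. clear E. rename E0 into E. split.
    + intros [->|H]; auto.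
    + intros [->|[[j' [-> [Hd Hlt]]]|H]]; auto. exfalso; eapply E; eauto.
Qed.

Lemma R_A' i w : anc w (VA' i) <->
  w = VA' i \/ (exists j', w = VZ i j' /\ ind i j') \/ anc w (VY' i).
Proof.
  rewrite anc_unfold. simpl par. destruct (fstd i) eqn:E.
  - apply fstd_iff in E as [E1 E2]. rewrite R_Z. split.
    + intros [->|[->|[[j' [-> [Hd Hlt]]]|H]]]; auto.
      * right; left; exists n0; auto.
      * right; left; exists j'; auto.
    + intros [->|[[j' [-> Hd]]|H]]; auto. right.
      destruct (Nat.lt_trichotomy j' n0) as [L|[L|L]].
      * exfalso; eapply E2; eauto.
      * subst; left; auto.
      * right; left; exists j'; auto.
  - pose proof (proj1 (fstd_None i) E) as E0. clear E. rename E0 into E. split.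
    + intros [->|H]; auto.
    + intros [->|[[j' [-> Hd]]|H]]; auto. exfalso; eapply E; eauto.
Qed.

Ltac anc_exp_in H :=
  repeat first
    [ rewrite R_Y' in H | rewrite R_A in H | rewrite R_C in H | rewrite R_U0 in H
    | rewrite R_X1 in H | rewrite R_X2 in H | rewrite R_X3 in H | rewrite R_X4 in H
    | rewrite R_X5 in H | rewrite R_X6 in H | rewrite R_B1 in H | rewrite R_B2 in H
    | rewrite R_B3 in H | rewrite R_G1 in H | rewrite R_G2 in H | rewrite R_G3 in H
    | rewrite R_L in H | rewrite R_Z in H | rewrite R_A' in H | rewrite R_U in H by lia
    | rewrite R_Y in H ].

Ltac anc_exp :=
  repeat first
    [ rewrite R_Y' | rewrite R_A | rewrite R_C | rewrite R_U0
    | rewrite R_X1 | rewrite R_X2 | rewrite R_X3 | rewrite R_X4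
    | rewrite R_X5 | rewrite R_X6 | rewrite R_B1 | rewrite R_B2
    | rewrite R_B3 | rewrite R_G1 | rewrite R_G2 | rewrite R_G3
    | rewrite R_L | rewrite R_Z | rewrite R_A' | rewrite R_U by lia
    | rewrite R_Y ].

Ltac solve_side := first [ assumption | lia | (split; solve_side) ].
Ltac pick := first [ reflexivity | (left; pick) | (right; pick)
                   | (eexists; split; [reflexivity | solve_side]) ].

Ltac kill_hyp H :=
  repeat match type of H with
  | _ \/ _ => destruct H as [H|H]
  | exists _, _ => let x := fresh "x" in destruct H as [x H]
  | _ /\ _ => let H' := fresh "H" in destruct H as [H H']
  end;
  first [ discriminate H | (injection H; intros; subst; lia) | (injection H; intros; subst; tauto) ].

Ltac nanc := let H := fresh "NA" in intro H; anc_exp_in H; kill_hyp H.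
Ltac panc := anc_exp; pick.



Lemma display_in (a b c d : taxon) p : Vs p -> p <> r0 ->
  Vs (phi a) -> Vs (phi b) -> Vs (phi c) -> Vs (phi d) ->
  anc p (phi a) -> anc p (phi b) -> ~ anc p (phi c) -> ~ anc p (phi d) ->
  displays adj phi ((a, b), (c, d)).
Proof. intros; apply (display_by a b c d p); auto; tauto. Qed.

Lemma display_out (a b c d : taxon) p : Vs p -> p <> r0 ->
  Vs (phi a) -> Vs (phi b) -> Vs (phi c) -> Vs (phi d) ->
  ~ anc p (phi a) -> ~ anc p (phi b) -> anc p (phi c) -> anc p (phi d) ->
  displays adj phi ((a, b), (c, d)).
Proof. intros; apply (display_by a b c d p); auto; tauto. Qed.


Lemma anc_ZZ i j1 j2 : ind i j2 -> j1 <= j2 -> anc (VZ i j2) (VZ i j1).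
Proof.
  intros H1 L. destruct (Nat.eq_dec j1 j2) as [E|E]; [subst; apply anc_refl|].
  rewrite R_Z. right; left. exists j2. split; auto. split; auto. lia.
Qed.

Lemma anc_ZC i j1 j2 : ind i j2 -> j1 <= j2 -> anc (VZ i j2) (VC i j1).
Proof. intros. rewrite R_C. right. apply anc_ZZ; auto. Qed.

Lemma anc_ZA' i j : ind i j -> anc (VZ i j) (VA' i).
Proof. intros. rewrite R_A'. right; left. exists j; auto. Qed.

Ltac panc2 := first [ apply anc_refl | (apply anc_ZA'; assumption)
  | (apply anc_ZC; [assumption|lia]) | panc ].
Ltac fin := first [ (unfold Vs; simpl; solve_side) | (unfold r0; neq_tac) | nanc | panc2 ].

Ltac rot_cases :=
  repeat match goal with
  | |- context [rot ?t ?p] =>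
      let H := fresh "Hr" in
      assert (H : 1 <= rot t p <= 3) by (apply rot_range; first [apply pos_range | lia]);
      destruct (rot t p) as [|[|[|[|?]]]]; try lia
  end.

Ltac phis := simpl; unfold vpos, vneg, negl, lval; simpl.
Ltac sig_cases i := let E := fresh "Si" in destruct (sigma i) eqn:E.

Lemma last_exists i : 1 <= i <= n -> exists jl, ind i jl /\ forall x, ind i x -> x <= jl.
Proof.
  intros Hi. destruct (lastd i) eqn:E.
  - apply lastd_iff in E as [E1 E2]. exists n0. split; auto. intros x Hx.
    destruct (Nat.le_gt_cases x n0); auto. exfalso; eapply E2; eauto.
  - exfalso. destruct (delta_nonempty i Hi) as [j Hj]. eapply lastd_None; eauto.
Qed.

Lemma disp_fam1 i : 1 <= i <= n -> displays adj phi (As i, Bs).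
Proof.
  intros Hi. unfold As, Bs. apply (display_in _ _ _ _ (VY' i)); phis; sig_cases i; rewrite ?Si; simpl; fin.
Qed.

Lemma disp_fam2 j p : 1 <= j <= m -> 1 <= p <= 3 -> displays adj phi (Ds j p, Bs).
Proof.
  intros Hj Hp. unfold Ds, Bs. apply (display_in _ _ _ _ (VX j 1)); simpl; rot_cases; fin.
Qed.


Lemma disp_fam3 i j j' : 1 <= i <= n -> ind i j -> ind i j' ->
  displays adj phi (Ss j (vpos i), Ss j' (vneg i)).
Proof.
  intros Hi Hj Hj'. destruct (last_exists i Hi) as [jl [Hl Hl']].
  pose proof (Hl' j Hj). pose proof (Hl' j' Hj'). pose proof (ind_range _ _ Hj). pose proof (ind_range _ _ Hj').
  unfold Ss. sig_cases i.
  - apply (display_out _ _ _ _ (VZ i jl)); phis; rewrite ?Si; simpl; rot_cases; fin.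
  - apply (display_in _ _ _ _ (VZ i j)); phis; rewrite ?Si; simpl; rot_cases; fin.
Qed.

Lemma disp_fam4 i j j' b : 1 <= i <= n -> ind i j -> ind i j' -> j < j' ->
  displays adj phi (Ss j (i, b), Ks cl j' (i, negb b)).
Proof.
  intros Hi Hj Hj' Hlt. pose proof (ind_range _ _ Hj). pose proof (ind_range _ _ Hj').
  unfold Ss, Ks. destruct (lit_eqb _ _); destruct b; sig_cases i.
  all: first
    [ solve [apply (display_out _ _ _ _ (VX j' 1)); phis; rewrite ?Si; simpl; rot_cases; fin]
    | solve [apply (display_in _ _ _ _ (VZ i j)); phis; rewrite ?Si; simpl; rot_cases; fin] ].
Qed.

Lemma disp_fam5 i j j' b : 1 <= i <= n -> ind i j -> j < j' <= m ->
  displays adj phi (Ks cl j (i, b), Fs j').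
Proof.
  intros Hi Hj Hlt. pose proof (ind_range _ _ Hj).
  unfold Fs, Ks. destruct (lit_eqb _ _); destruct b; sig_cases i;
  apply (display_out _ _ _ _ (VU j')); phis; rewrite ?Si; simpl; rot_cases; fin.
Qed.

Lemma disp_fam6 i' i j b' b : 1 <= i' -> i' < i <= n -> ind i j ->
  displays adj phi (Hs (i', b'), Ss j (i, b)).
Proof.
  intros Hi' Hi Hj. pose proof (ind_range _ _ Hj).
  unfold Hs, Ss. destruct b, b'; sig_cases i; sig_cases i';
  apply (display_out _ _ _ _ (VY i)); phis; rewrite ?Si, ?Si0; simpl; rot_cases; fin.
Qed.

Lemma disp_fam7 i j b : 1 <= i <= n -> 1 <= j <= m -> displays adj phi (Hs (i, b), Fs j).
Proof.
  intros Hi Hj. unfold Hs, Fs. destruct b; sig_cases i;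
  apply (display_out _ _ _ _ (VU 1)); phis; rewrite ?Si; simpl; fin.
Qed.


Lemma tp_spec j p : 1 <= j <= m -> 1 <= p <= 3 -> (lval sigma (cl j p) = true <-> p = tpos cl sigma j).
Proof.
  intros Hj Hp. destruct (Hsat j Hj) as [p0 [Hp0 [L0 U0]]].
  assert (T : tpos cl sigma j = p0).
  { unfold tpos. destruct (lval sigma (cl j 1)) eqn:E1; [apply U0; auto; lia|].
    destruct (lval sigma (cl j 2)) eqn:E2; [apply U0; auto; lia|].
    assert (p0 <> 1) by (intro; subst; congruence). assert (p0 <> 2) by (intro; subst; congruence). lia. }
  rewrite T. split; [intros H; apply U0; auto|intros ->; auto].
Qed.

Lemma tpos_range j : 1 <= tpos cl sigma j <= 3.
Proof. apply tp_range. Qed.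

Lemma lit_eqb_refl l : lit_eqb l l = true.
Proof. unfold lit_eqb. rewrite Nat.eqb_refl. destruct (snd l); reflexivity. Qed.

Lemma lit_eqb_negl l : lit_eqb (negl l) l = false.
Proof. unfold lit_eqb, negl. simpl. destruct (snd l); simpl; rewrite andb_false_r; reflexivity. Qed.

Lemma negl_negl l : negl (negl l) = l.
Proof. destruct l as [i b]; unfold negl; simpl. rewrite negb_involutive; reflexivity. Qed.

Lemma Ks_pos j p : 1 <= j <= m -> 1 <= p <= 3 -> Ks cl j (cl j p) = (TBeta j (negl (cl j p)), TLambda j).
Proof. intros. unfold Ks. rewrite pos_cl by auto. rewrite lit_eqb_refl. reflexivity. Qed.

Lemma Ks_neg j p : 1 <= j <= m -> 1 <= p <= 3 -> Ks cl j (negl (cl j p)) = (TBeta j (cl j p), TGamma j p).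
Proof.
  intros. unfold Ks. replace (fst (negl (cl j p))) with (fst (cl j p)) by reflexivity.
  rewrite pos_cl by auto. rewrite lit_eqb_negl, negl_negl. reflexivity.
Qed.

Lemma phi_bC j p : 1 <= j <= m -> 1 <= p <= 3 ->
  phi (TBeta j (cl j p)) = if p =? tpos cl sigma j then VB j (rot (tpos cl sigma j) p) else VC (fst (cl j p)) j.
Proof.
  intros. simpl. pose proof (tp_spec j p H H0) as T. rewrite pos_cl by auto.
  destruct (lval sigma (cl j p)) eqn:E; destruct (p =? tpos cl sigma j) eqn:E2; auto.
  - apply Nat.eqb_neq in E2. exfalso; apply E2; apply T; auto.
  - apply Nat.eqb_eq in E2. apply T in E2. congruence.
Qed.

Lemma phi_bnC j p : 1 <= j <= m -> 1 <= p <= 3 ->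
  phi (TBeta j (negl (cl j p))) = if p =? tpos cl sigma j then VC (fst (cl j p)) j else VB j (rot (tpos cl sigma j) p).
Proof.
  intros. simpl. pose proof (tp_spec j p H H0) as T. rewrite lval_negl.
  replace (fst (negl (cl j p))) with (fst (cl j p)) by reflexivity. rewrite pos_cl by auto.
  destruct (lval sigma (cl j p)) eqn:E; destruct (p =? tpos cl sigma j) eqn:E2; simpl; auto.
  - apply Nat.eqb_neq in E2. exfalso; apply E2; apply T; auto.
  - apply Nat.eqb_eq in E2. apply T in E2. congruence.
Qed.

Lemma phi_aC j p : 1 <= j <= m -> 1 <= p <= 3 ->
  phi (TAlpha (cl j p)) = if p =? tpos cl sigma j then VA (fst (cl j p)) else VA' (fst (cl j p)).
Proof.
  intros. simpl. pose proof (tp_spec j p H H0) as T.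
  destruct (lval sigma (cl j p)) eqn:E; destruct (p =? tpos cl sigma j) eqn:E2; simpl; auto.
  - apply Nat.eqb_neq in E2. exfalso; apply E2; apply T; auto.
  - apply Nat.eqb_eq in E2. apply T in E2. congruence.
Qed.

Lemma clause_facts j : 1 <= j <= m ->
  (forall p, 1 <= p <= 3 -> 1 <= fst (cl j p) <= n /\ ind (fst (cl j p)) j) /\
  fst (cl j 1) <> fst (cl j 2) /\ fst (cl j 1) <> fst (cl j 3) /\ fst (cl j 2) <> fst (cl j 3).
Proof.
  intros Hj. destruct Hwf as [W1 [W2 W3]]. split; [|split; [|split]].
  - intros p Hp. split; [apply W1; auto|]. split; auto. exists p; auto.
  - intro E; apply W2 in E; auto; lia.
  - intro E; apply W2 in E; auto; lia.
  - intro E; apply W2 in E; auto; lia.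
Qed.

Ltac cfacts j Hj :=
  let F := fresh "CF" in
  destruct (clause_facts j Hj) as [F [? [? ?]]];
  destruct (F 1 ltac:(lia)) as [? ?]; destruct (F 2 ltac:(lia)) as [? ?]; destruct (F 3 ltac:(lia)) as [? ?];
  clear F.

Ltac ctac Ht := rewrite ?phi_bC, ?phi_bnC, ?phi_aC by (auto; lia); simpl; rewrite ?Ht; simpl; fin.

Ltac tcases j Ht :=
  let H := fresh in pose proof (tpos_range j) as H;
  assert (Ht : tpos cl sigma j = 1 \/ tpos cl sigma j = 2 \/ tpos cl sigma j = 3) by lia;
  clear H; destruct Ht as [Ht|[Ht|Ht]].

Lemma disp_KK j p : 1 <= j <= m -> 1 <= p <= 3 ->
  displays adj phi (Ks cl j (negl (cl j p)), Ks cl j (cl j p)).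
Proof.
  intros Hj Hp. rewrite Ks_neg, Ks_pos by auto. cfacts j Hj.
  tcases j Ht; destruct p as [|[|[|[|p]]]]; try lia;
  first [ solve [apply (display_in _ _ _ _ (VX j 6)); ctac Ht]
        | solve [apply (display_out _ _ _ _ (VX j 2)); ctac Ht]
        | solve [apply (display_out _ _ _ _ (VX j 5)); ctac Ht] ].
Qed.


Lemma disp_KL j p : 1 <= j <= m -> 1 <= p <= 3 ->
  displays adj phi (Ks cl j (negl (cl j p)), Ls cl j p).
Proof.
  intros Hj Hp. rewrite Ks_neg by auto. unfold Ls. cfacts j Hj.
  tcases j Ht; destruct p as [|[|[|[|p]]]]; try lia; cbn [next3];
  first [ solve [apply (display_in _ _ _ _ (VX j 6)); ctac Ht]
        | solve [apply (display_out _ _ _ _ (VX j 3)); ctac Ht]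
        | solve [apply (display_out _ _ _ _ (VX j 4)); ctac Ht] ].
Qed.

Lemma disp_SK j p : 1 <= j <= m -> 1 <= p <= 3 ->
  displays adj phi (Ss j (cl j (next3 p)), Ks cl j (cl j p)).
Proof.
  intros Hj Hp. rewrite Ks_pos by auto. unfold Ss. cfacts j Hj.
  tcases j Ht; destruct p as [|[|[|[|p]]]]; try lia; cbn [next3];
  first [ solve [apply (display_in _ _ _ _ (VZ (fst (cl j 1)) j)); ctac Ht]
        | solve [apply (display_in _ _ _ _ (VZ (fst (cl j 2)) j)); ctac Ht]
        | solve [apply (display_in _ _ _ _ (VZ (fst (cl j 3)) j)); ctac Ht]
        | solve [apply (display_out _ _ _ _ (VX j 2)); ctac Ht]
        | solve [apply (display_out _ _ _ _ (VX j 5)); ctac Ht] ].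
Qed.

Lemma disp_SL j p : 1 <= j <= m -> 1 <= p <= 3 ->
  displays adj phi (Ss j (cl j (next3 (next3 p))), Ls cl j p).
Proof.
  intros Hj Hp. unfold Ss, Ls. cfacts j Hj.
  tcases j Ht; destruct p as [|[|[|[|p]]]]; try lia; cbn [next3];
  first [ solve [apply (display_in _ _ _ _ (VZ (fst (cl j 1)) j)); ctac Ht]
        | solve [apply (display_in _ _ _ _ (VZ (fst (cl j 2)) j)); ctac Ht]
        | solve [apply (display_in _ _ _ _ (VZ (fst (cl j 3)) j)); ctac Ht]
        | solve [apply (display_out _ _ _ _ (VX j 3)); ctac Ht]
        | solve [apply (display_out _ _ _ _ (VX j 4)); ctac Ht] ].
Qed.

Lemma displays_ok : displays_set adj phi (QI n m cl).
Proof.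
  intros q Hq. destruct Hq as [H|[H|[H|[H|[H|[H|[H|H]]]]]]].
  - destruct H as [i [Hi ->]]. apply disp_fam1; auto.
  - destruct H as [j [p [Hj [Hp ->]]]]. apply disp_fam2; auto.
  - destruct H as [i [j [j' [Hi [Hj [Hj' ->]]]]]]. apply disp_fam3; auto.
  - destruct H as [i [j [j' [Hi [Hj [Hj' [Hlt [->| ->]]]]]]]].
    + apply (disp_fam4 i j j' true); auto.
    + apply (disp_fam4 i j j' false); auto.
  - destruct H as [i [j [j' [Hi [Hj [Hlt [->| ->]]]]]]].
    + apply (disp_fam5 i j j' false); auto.
    + apply (disp_fam5 i j j' true); auto.
  - destruct H as [i' [i [j [Hi' [Hi [Hj [->|[->|[->| ->]]]]]]]]].
    + apply (disp_fam6 i' i j true true); auto.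
    + apply (disp_fam6 i' i j false true); auto.
    + apply (disp_fam6 i' i j true false); auto.
    + apply (disp_fam6 i' i j false false); auto.
  - destruct H as [i [j [Hi [Hj [->| ->]]]]].
    + apply (disp_fam7 i j false); auto.
    + apply (disp_fam7 i j true); auto.
  - destruct H as [j [Hj H]]. cbv zeta in H.
    destruct H as [->|[->|[->|[->|[->|[->|[->|[->|[->|[->|[->| ->]]]]]]]]]]].
    + apply (disp_KK j 1); auto; lia.
    + apply (disp_KK j 2); auto; lia.
    + apply (disp_KK j 3); auto; lia.
    + apply (disp_KL j 1); auto; lia.
    + apply (disp_KL j 2); auto; lia.
    + apply (disp_KL j 3); auto; lia.
    + apply (disp_SK j 1); auto; lia.
    + apply (disp_SK j 2); auto; lia.
    + apply (disp_SK j 3); auto; lia.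
    + apply (disp_SL j 1); auto; lia.
    + apply (disp_SL j 2); auto; lia.
    + apply (disp_SL j 3); auto; lia.
Qed.


Lemma DC_mk u u1 x p1 A B C D :
  par u1 = u -> anc u1 A -> ~ anc u1 B -> anc u B ->
  ~ anc u C -> ~ anc u D ->
  par p1 = x -> anc p1 C -> ~ anc p1 D -> anc x D -> anc x (par u) ->
  anc (par u) C \/ anc (par u) D ->
  DC u A B C D.
Proof.
  intros P1 A1 B1 B2 C1 D1 P2 C2 D2 D3 X H5.
  split; [eapply anc_trans; [|exact A1]; rewrite <- P1; apply anc_par|].
  split; auto. split; [eapply lca_child; eauto|].
  split; auto. split; auto. split; auto.
  intros w Wc Wd. eapply anc_trans; [|exact X]. eapply lca_child; eauto.
Qed.

Lemma DC_rt u u1 A B C : Vs (par u) -> u <> r0 ->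
  par u1 = u -> anc u1 A -> ~ anc u1 B -> anc u B -> ~ anc u C -> anc (par u) C ->
  DC u A B C (VY 0).
Proof.
  intros V R P1 A1 B1 B2 C1 C2.
  split; [eapply anc_trans; [|exact A1]; rewrite <- P1; apply anc_par|].
  split; auto. split; [eapply lca_child; eauto|].
  split; auto. split; [intro Z; apply anc_r0 in Z; auto|]. split; auto.
  apply lca_root; auto.
Qed.

Lemma DC_swapAB u A B C D : DC u B A C D -> DC u A B C D.
Proof.
  intros [H1 [H2 [H3 H4]]]. split; [exact H2|split; [exact H1|split; [intros w X Y; apply H3; auto|exact H4]]].
Qed.

Lemma DC_swapCD u A B C D : DC u A B D C -> DC u A B C D.
Proof.
  intros [H1 [H2 [H3 [H4 [H5 [H6 H7]]]]]].
  split; [exact H1|split; [exact H2|split; [exact H3|split; [exact H5|split; [exact H4|]]]]].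
  split; [intros w X Y; apply H6; auto|tauto].
Qed.

Definition dist_goal (u : vert) : Prop :=
  exists q, QI n m cl q /\ forall F, edge_set adj F -> separates adj phi F q -> Fe F u.

Ltac fin2 := first [ reflexivity | fin ].

Lemma dist_E1 k : 2 <= k <= n -> dist_goal (VY k).
Proof.
  intros Hk. destruct k as [|[|k]]; try lia.
  destruct (delta_nonempty (S (S k))) as [j Hj]; [lia|]. pose proof (ind_range _ _ Hj).
  sig_cases (S (S k)).
  - exists (Hs (vpos (S k)), Ss j (vpos (S (S k)))). split.
    + do 5 right; left. exists (S k), (S (S k)), j. split; [lia|split; [lia|split; [auto|left; reflexivity]]].
    + intros F HE HS. unfold Hs, Ss in HS. eapply dist_by; [ | | | | | exact HS];
      phis; rewrite ?Si; simpl; sig_cases (S k); rot_cases; try solve [fin].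
      all: right; apply (DC_rt _ (VY' (S (S k)))); fin2.
  - exists (Hs (vpos (S k)), Ss j (vneg (S (S k)))). split.
    + do 5 right; left. exists (S k), (S (S k)), j. split; [lia|split; [lia|split; [auto|right; right; left; reflexivity]]].
    + intros F HE HS. unfold Hs, Ss in HS. eapply dist_by; [ | | | | | exact HS];
      phis; rewrite ?Si; simpl; sig_cases (S k); rot_cases; try solve [fin].
      all: right; apply (DC_rt _ (VY' (S (S k)))); fin2.
Qed.


Lemma dist_E2 i : 1 <= i <= n -> dist_goal (VY' i).
Proof.
  intros Hi. exists (As i, Bs). split; [left; exists i; auto|].
  intros F HE HS. unfold As, Bs in HS. eapply dist_by; [ | | | | | exact HS];
  phis; sig_cases i; rewrite ?Si; simpl; try solve [fin].
  all: first [ solve [left; apply (DC_rt _ (VA i)); cbn [par]; fin2]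
             | solve [left; apply DC_swapAB; apply (DC_rt _ (VA i)); cbn [par]; fin2] ].
Qed.

Lemma dist_E3 i j : 1 <= i <= n -> ind i j -> dist_goal (VZ i j).
Proof.
  intros Hi Hj. pose proof (ind_range _ _ Hj). destruct (nxt i j) as [j'|] eqn:E.
  - assert (Hpar : par (VZ i j) = VZ i j') by (simpl; rewrite E; reflexivity).
    apply nxt_iff in E as [Hlt [Hj' Hgap]]. pose proof (ind_range _ _ Hj').
    sig_cases i.
    + exists (Ss j (vneg i), Ks cl j' (vpos i)). split.
      * do 3 right; left. exists i, j, j'. split; [exact Hi|split; [exact Hj|split; [exact Hj'|split; [exact Hlt|right; reflexivity]]]].
      * intros F HE HS. unfold Ss, Ks in HS. revert HS; destruct (lit_eqb _ _); intro HS;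
        (eapply dist_by; [ | | | | | exact HS]); phis; rewrite ?Si; simpl; rot_cases; try solve [fin];
        left; apply DC_swapAB; apply (DC_mk _ (VC i j) (VY i) (VY' i)); rewrite ?Hpar; cbn [par]; fin2.
    + exists (Ss j (vpos i), Ks cl j' (vneg i)). split.
      * do 3 right; left. exists i, j, j'. split; [exact Hi|split; [exact Hj|split; [exact Hj'|split; [exact Hlt|left; reflexivity]]]].
      * intros F HE HS. unfold Ss, Ks in HS. revert HS; destruct (lit_eqb _ _); intro HS;
        (eapply dist_by; [ | | | | | exact HS]); phis; rewrite ?Si; simpl; rot_cases; try solve [fin];
        left; apply DC_swapAB; apply (DC_mk _ (VC i j) (VY i) (VY' i)); rewrite ?Hpar; cbn [par]; fin2.
  - assert (Hpar : par (VZ i j) = VY' i) by (simpl; rewrite E; reflexivity).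
    exists (Ss j (vpos i), Ss j (vneg i)). split.
    + do 2 right; left. exists i, j, j. auto.
    + intros F HE HS. unfold Ss in HS. eapply dist_by; [ | | | | | exact HS];
      phis; sig_cases i; rewrite ?Si; simpl; rot_cases; try solve [fin].
      all: first [ solve [left; apply DC_swapAB; apply (DC_mk _ (VC i j) (VY i) (VY' i)); rewrite ?Hpar; cbn [par]; fin2]
                 | solve [right; apply DC_swapAB; apply (DC_mk _ (VC i j) (VY i) (VY' i)); rewrite ?Hpar; cbn [par]; fin2] ].
Qed.

Lemma dist_E4a : dist_goal (VU 1).
Proof.
  pose proof n_pos as Hn.
  exists (Hs (vpos n), Fs 1). split.
  - do 6 right; left. exists n, 1. split; [lia|split; [lia|right; reflexivity]].
  - intros F HE HS. unfold Hs, Fs in HS. eapply dist_by; [ | | | | | exact HS];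
    phis; sig_cases n; rewrite ?Si; simpl; try solve [fin].
    all: right; apply (DC_rt _ (VX 1 1)); cbn [par]; fin2.
Qed.

Lemma dist_E4b k : 2 <= k <= m -> dist_goal (VU k).
Proof.
  intros Hk. destruct k as [|[|k]]; try lia.
  assert (Hj : 1 <= S k <= m) by lia. cfacts (S k) Hj.
  set (i := fst (cl (S k) 1)) in *.
  sig_cases i.
  - exists (Ks cl (S k) (vpos i), Fs (S (S k))). split.
    + do 4 right; left. exists i, (S k), (S (S k)). split; [lia|split; [assumption|split; [lia|right; reflexivity]]].
    + intros F HE HS. unfold Ks, Fs in HS. revert HS; destruct (lit_eqb _ _); intro HS;
      (eapply dist_by; [ | | | | | exact HS]); phis; rewrite ?Si; simpl; rot_cases; try solve [fin];
      right; apply (DC_mk _ (VX (S (S k)) 1) (VY i) (VY' i)); cbn [par]; fin2.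
  - exists (Ks cl (S k) (vneg i), Fs (S (S k))). split.
    + do 4 right; left. exists i, (S k), (S (S k)). split; [lia|split; [assumption|split; [lia|left; reflexivity]]].
    + intros F HE HS. unfold Ks, Fs in HS. revert HS; destruct (lit_eqb _ _); intro HS;
      (eapply dist_by; [ | | | | | exact HS]); phis; rewrite ?Si; simpl; rot_cases; try solve [fin];
      right; apply (DC_mk _ (VX (S (S k)) 1) (VY i) (VY' i)); cbn [par]; fin2.
Qed.


Ltac qi8 j := do 7 right; exists j; split; [lia|]; cbv zeta;
  repeat (first [left; reflexivity | right]); reflexivity.

Ltac dcY u1 j := first
  [ solve [apply (DC_mk _ u1 (VY (fst (cl j 1))) (VY' (fst (cl j 1)))); cbn [par]; fin2]
  | solve [apply (DC_mk _ u1 (VY (fst (cl j 2))) (VY' (fst (cl j 2)))); cbn [par]; fin2]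
  | solve [apply (DC_mk _ u1 (VY (fst (cl j 3))) (VY' (fst (cl j 3)))); cbn [par]; fin2] ].

Ltac cld j Ht q side u1 := exists q; split; [qi8 j |
  intros F HE HS; rewrite ?Ks_neg, ?Ks_pos in HS by lia; unfold Ss, Ls in HS; cbn [next3] in HS;
  eapply dist_by; [ | | | | | exact HS]; rewrite ?phi_bC, ?phi_bnC, ?phi_aC by lia;
  simpl; rewrite ?Ht; simpl; try solve [fin]; side; dcY u1 j ].

Ltac x1 j Ht p := exists (Ds j p, Bs); split;
  [ right; left; exists j, p; split; [lia|split; [lia|reflexivity]]
  | intros F HE HS; unfold Ds, Bs in HS; eapply dist_by; [ | | | | | exact HS];
    simpl; rewrite ?Ht; simpl; try solve [fin]; left; apply (DC_rt _ (VG j 2)); cbn [par]; fin2 ].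
Ltac x2 j Ht p := cld j Ht (Ks cl j (negl (cl j p)), Ks cl j (cl j p)) ltac:(right) (VX j 3).
Ltac x3 j Ht p := cld j Ht (Ss j (cl j (next3 (next3 p))), Ls cl j p) ltac:(right) (VB j 2).
Ltac x4 j Ht p := cld j Ht (Ks cl j (negl (cl j p)), Ls cl j p) ltac:(right) (VX j 5).
Ltac x5 j Ht p := cld j Ht (Ss j (cl j (next3 p)), Ks cl j (cl j p)) ltac:(right) (VB j 3).
Ltac x6 j Ht p := cld j Ht (Ks cl j (negl (cl j p)), Ks cl j (cl j p)) ltac:(left) (VB j 1).

Lemma dist_E5 j k : 1 <= j <= m -> 1 <= k <= 6 -> dist_goal (VX j k).
Proof.
  intros Hj Hk. cfacts j Hj. tcases j Ht; destruct k as [|[|[|[|[|[|[|k]]]]]]]; try lia.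
  - x1 j Ht 2.
  - x2 j Ht 2.
  - x3 j Ht 2.
  - x4 j Ht 3.
  - x5 j Ht 3.
  - x6 j Ht 1.
  - x1 j Ht 3.
  - x2 j Ht 3.
  - x3 j Ht 3.
  - x4 j Ht 1.
  - x5 j Ht 1.
  - x6 j Ht 2.
  - x1 j Ht 1.
  - x2 j Ht 1.
  - x3 j Ht 1.
  - x4 j Ht 2.
  - x5 j Ht 2.
  - x6 j Ht 3.
Qed.

Lemma dist_all u : Vs u -> u <> r0 -> isleafT u = false -> isleafT (par u) = false -> dist_goal u.
Proof.
  unfold Vs, r0. intros Hu Hr L1 L2. destruct u; simpl in Hu, L1, L2; try discriminate.
  - destruct k as [|[|k]]; [congruence|discriminate|]. apply dist_E1; lia.
  - apply dist_E2; auto.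
  - destruct k as [|[|k]]; [discriminate| |].
    + apply dist_E4a.
    + apply dist_E4b; lia.
  - destruct Hu. apply dist_E5; auto.
  - destruct Hu. apply dist_E3; auto.
Qed.

Lemma dist_ok : distinguished_by Vs adj phi (QI n m cl).
Proof.
  intros u v A Nu Nv. destruct (adj_Vs u v A) as [Hu Hv].
  assert (Lu : isleafT u = false) by (destruct (isleafT u) eqn:E; auto; exfalso; apply Nu; apply leaf_iff; auto).
  assert (Lv : isleafT v = false) by (destruct (isleafT v) eqn:E; auto; exfalso; apply Nv; apply leaf_iff; auto).
  pose proof A as A'. apply adj_iff in A' as [[B1 [B2 B3]]|[B1 [B2 B3]]].
  - subst v. destruct (dist_all u Hu B2 Lu Lv) as [q [Hq Hd]]. exists q. split; auto. split; auto; intros F HE HS; specialize (Hd F HE HS); unfold Fe in Hd; tauto.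
  - subst u. destruct (dist_all v Hv B2 Lv Lu) as [q [Hq Hd]]. exists q. split; auto. split; auto; intros F HE HS; specialize (Hd F HE HS); unfold Fe in Hd; tauto.
Qed.

End Main.

Theorem theorem9 (n m : nat) (cl : nat -> nat -> lit)
  (Hm : 1 <= m) (Hwf : wf_instance n m cl)
  (sigma : nat -> bool) (Hsat : satisfying m cl sigma) :
  is_X_tree (TI_verts n m cl) (TI_adj n m cl) (XI n m cl) (phi_sigma cl sigma) /\
  is_ternary (TI_verts n m cl) (TI_adj n m cl) /\
  is_phylogenetic (TI_verts n m cl) (TI_adj n m cl) (XI n m cl) (phi_sigma cl sigma) /\
  displays_set (TI_adj n m cl) (phi_sigma cl sigma) (QI n m cl) /\
  distinguished_by (TI_verts n m cl) (TI_adj n m cl) (phi_sigma cl sigma) (QI n m cl).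
Proof.
  split; [exact (xtree_ok n m cl Hm Hwf sigma)|].
  split; [exact (ternary_ok n m cl Hm Hwf)|].
  split; [exact (phylo_ok n m cl Hm Hwf sigma)|].
  split; [exact (displays_ok n m cl Hm Hwf sigma Hsat)|].
  exact (dist_ok n m cl Hm Hwf sigma Hsat).
Qed.
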